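(* Let $p\ge0$, $\Omega>0$, $S\in\mathcal B_\Omega$, $x\in[0,\pi]$. Then the operator $\tilde Q(x)T^{-1}$ maps $m$ into $l_2$, and for every $f\in m$, $$\|\tilde Q(x)T^{-1}f\|_{l_2}\le C\|f\|_m,$$ where $C$ depends only on $p$ and $\Omega$.
   Context: $\mathcal S_p$: collections $S=\{\lambda_n,\alpha_n\}_{n\ge1}$ of complex numbers with $\rho_n:=\sqrt{\lambda_n}$ ($\arg\rho_n\in[-\pi/2,\pi/2)$), $\rho_n=n-p-1+\varkappa_n$, $\alpha_n=2/\pi+\kappa_n$, $\{\varkappa_n\},\{\kappa_n\}\in l_2$. Model data: $\tilde\rho_n=0$ for $n\le p+1$, $\tilde\rho_n=n-p-1$ for $n\ge p+1$, $\tilde\lambda_n=\tilde\rho_n^2$; $\tilde\alpha_1=1/\pi$, $\tilde\alpha_n=0$ for $2\le n\le p+1$, $\tilde\alpha_n=2/\pi$ for $n\ge p+2$. $\xi_n=|\rho_n-\tilde\rho_n|+|\alpha_n-\tilde\alpha_n|$, $\mathcal B_\Omega=\{S\in\mathcal S_p:(\sum\xi_n^2)^{1/2}\le\Omega\}$. Notation: $\lambda_{n0}=\lambda_n,\rho_{n0}=\rho_n,\alpha_{n0}=\alpha_n$, $\lambda_{n1}=\tilde\lambda_n,\rho_{n1}=\tilde\rho_n,\alpha_{n1}=\tilde\alpha_n$, $\hat\rho_n=\rho_n-\tilde\rho_n$; $\tilde D(x,\lambda,\mu)=\int_0^x\cos(\sqrt\lambda t)\cos(\sqrt\mu t)dt$;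 $\tilde Q_{ni,kj}(x)=\alpha_{kj}\tilde D(x,\rho_{ni}^2,\rho_{kj}^2)$; $\tilde Q_{nk}=\begin{pmatrix}\tilde Q_{n0,k0}&-\tilde Q_{n0,k1}\\ \tilde Q_{n1,k0}&-\tilde Q_{n1,k1}\end{pmatrix}$; $T_k^{-1}=\begin{pmatrix}\hat\rho_k&1\\0&1\end{pmatrix}$. $m$: Banach space of bounded sequences $f=(f_{ni})_{n\ge1,i=0,1}$ with $\|f\|_m=\sup|f_{ni}|$; $l_2$ is the space of square-summable sequences indexed by $(n,i)$. For $f\in m$, $(T^{-1}f)_n=T_n^{-1}f_n=(\hat\rho_nf_{n0}+f_{n1},f_{n1})^T$ and $(\tilde Q(x)T^{-1}f)_n=\sum_{k\ge1}\tilde Q_{nk}(x)T_k^{-1}f_k$, $f_k=(f_{k0},f_{k1})^T$. *)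

(* Defs.v *)
From Stdlib Require Import Reals.
From Coquelicot Require Import Coquelicot.
Open Scope R_scope.

Definition Ccos (z : C) : C :=
  (cos (Re z) * cosh (Im z), - (sin (Re z) * sinh (Im z))).

(* square root with the branch arg in [-pi/2, pi/2) used in the paper *)
Definition csqrt (z : C) : C :=
  (sqrt ((Cmod z + Re z) / 2),
   if Rlt_dec 0 (Im z) then sqrt ((Cmod z - Re z) / 2)
   else - sqrt ((Cmod z - Re z) / 2)).

Definition Dt (x : R) (lam mu : C) : C :=
  @RInt C_R_CompleteNormedModule
    (fun t => Cmult (Ccos (Cmult (csqrt lam) (RtoC t))) (Ccos (Cmult (csqrt mu) (RtoC t))))
    0 x.

(* Data S = {lam_n, alpha_n}_{n>=1} : sequences nat -> C, only indices n >= 1 are used. *)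
Definition rho (lam : nat -> C) (n : nat) : C := csqrt (lam n).

Definition rho_t (p n : nat) : C :=
  if (n <=? p + 1)%nat then RtoC 0 else RtoC (INR n - INR p - 1).
Definition lam_t (p n : nat) : C := Cmult (rho_t p n) (rho_t p n).
Definition alpha_t (p n : nat) : C :=
  if (n =? 1)%nat then RtoC (1 / PI)
  else if (n <=? p + 1)%nat then RtoC 0 else RtoC (2 / PI).

Definition in_Sp (p : nat) (lam alpha : nat -> C) : Prop :=
  ex_series (fun n => (Cmod (Cminus (rho lam (S n)) (RtoC (INR (S n) - INR p - 1)))) ^ 2) /\
  ex_series (fun n => (Cmod (Cminus (alpha (S n)) (RtoC (2 / PI)))) ^ 2).

Definition xi (p : nat) (lam alpha : nat -> C) (n : nat) : R :=
  Cmod (Cminus (rho lam n) (rho_t p n)) + Cmod (Cminus (alpha n) (alpha_t p n)).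

Definition in_B (p : nat) (Om : R) (lam alpha : nat -> C) : Prop :=
  in_Sp p lam alpha /\
  sqrt (Series (fun n => (xi p lam alpha (S n)) ^ 2)) <= Om.

(* index i in {0,1} encoded as bool: false = 0 (data S), true = 1 (model data) *)
Definition rhoi (p : nat) (lam : nat -> C) (n : nat) (i : bool) : C :=
  if i then rho_t p n else rho lam n.
Definition alphai (p : nat) (alpha : nat -> C) (n : nat) (i : bool) : C :=
  if i then alpha_t p n else alpha n.

Definition Qt (p : nat) (lam alpha : nat -> C) (x : R) (n : nat) (i : bool) (k : nat) (j : bool) : C :=
  Cmult (alphai p alpha k j)
        (Dt x (Cmult (rhoi p lam n i) (rhoi p lam n i)) (Cmult (rhoi p lam k j) (rhoi p lam k j))).

Definition rhohat (p : nat) (lam : nat -> C) (k : nat) : C := Cminus (rho lam k) (rho_t p k).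

(* i-th component of tilde Q_{nk}(x) T_k^{-1} f_k, with
   T_k^{-1} f_k = (rhohat_k f_{k0} + f_{k1}, f_{k1}) and
   tilde Q_{nk} = [[Q_{n0,k0}, -Q_{n0,k1}], [Q_{n1,k0}, -Q_{n1,k1}]] *)
Definition QTterm (p : nat) (lam alpha : nat -> C) (x : R) (f : nat -> bool -> C)
    (n : nat) (i : bool) (k : nat) : C :=
  Cminus (Cmult (Qt p lam alpha x n i k false)
                (Cplus (Cmult (rhohat p lam k) (f k false)) (f k true)))
         (Cmult (Qt p lam alpha x n i k true) (f k true)).

Definition in_m (f : nat -> bool -> C) : Prop :=
  exists M : R, forall n i, (1 <= n)%nat -> Cmod (f n i) <= M.

Definition norm_m (f : nat -> bool -> C) : R :=
  real (Lub_Rbar (fun r => exists n i, (1 <= n)%nat /\ r = Cmod (f n i))).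

Definition in_l2 (g : nat -> bool -> C) : Prop :=
  ex_series (fun n => (Cmod (g (S n) false)) ^ 2 + (Cmod (g (S n) true)) ^ 2).

Definition norm_l2 (g : nat -> bool -> C) : R :=
  sqrt (Series (fun n => (Cmod (g (S n) false)) ^ 2 + (Cmod (g (S n) true)) ^ 2)).

(* Main.v *)
Require Import Defs.
From Stdlib Require Import Reals Lra Lia Psatz FunctionalExtensionality ZArith ClassicalEpsilon.
From Coquelicot Require Import Coquelicot.
Open Scope R_scope.


Definition CR (g : R -> R) := forall t, continuous g t.

Lemma CR_const c : CR (fun _ => c).
Proof. intro t; apply continuous_const. Qed.
Lemma CR_id : CR (fun t => t).
Proof. intro t; apply continuous_id. Qed.
Lemma CR_plus f g : CR f -> CR g -> CR (fun t => f t + g t).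
Proof. intros Hf Hg t; apply (continuous_plus f g); auto. Qed.
Lemma CR_mult f g : CR f -> CR g -> CR (fun t => f t * g t).
Proof. intros Hf Hg t; apply (continuous_mult f g); auto. Qed.
Lemma CR_ext f g : (forall t, f t = g t) -> CR f -> CR g.
Proof. intros H Hf. replace g with f; auto. apply functional_extensionality; auto. Qed.
Lemma CR_opp f : CR f -> CR (fun t => - f t).
Proof.
  intros Hf. apply (CR_ext (fun t => (-1) * f t)). intros; ring.
  apply CR_mult; auto using CR_const.
Qed.
Lemma CR_minus f g : CR f -> CR g -> CR (fun t => f t - g t).
Proof. intros; apply CR_plus; auto using CR_opp. Qed.
Lemma CR_cos f : CR f -> CR (fun t => cos (f t)).
Proof. intros Hf t; apply continuous_cos_comp; auto. Qed.
Lemma CR_sin f : CR f -> CR (fun t => sin (f t)).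
Proof. intros Hf t; apply continuous_sin_comp; auto. Qed.
Lemma CR_exp f : CR f -> CR (fun t => exp (f t)).
Proof. intros Hf t; apply continuous_exp_comp; auto. Qed.
Lemma CR_cosh f : CR f -> CR (fun t => cosh (f t)).
Proof.
  intros Hf. apply (CR_ext (fun t => (exp (f t) + exp (- f t)) * / 2)).
  intros; unfold cosh; lra.
  apply CR_mult; [apply CR_plus; apply CR_exp; auto using CR_opp|apply CR_const].
Qed.
Lemma CR_sinh f : CR f -> CR (fun t => sinh (f t)).
Proof.
  intros Hf. apply (CR_ext (fun t => (exp (f t) - exp (- f t)) * / 2)).
  intros; unfold sinh; lra.
  apply CR_mult; [apply CR_minus; apply CR_exp; auto using CR_opp|apply CR_const].
Qed.
Lemma CR_lin a b : CR (fun t => a * t + b).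
Proof. apply CR_plus; [apply CR_mult; [apply CR_const|apply CR_id]|apply CR_const]. Qed.
Lemma CR_scal a f : CR f -> CR (fun t => a * f t).
Proof. intros; apply CR_mult; auto using CR_const. Qed.

Lemma CR_ex a b f : CR f -> ex_RInt f a b.
Proof. intros Hf. apply (ex_RInt_continuous (V:=R_CompleteNormedModule)). intros; apply Hf. Qed.

Definition I (x : R) (g : R -> R) : R := RInt g 0 x.

Lemma I_plus x f g : CR f -> CR g -> I x (fun t => f t + g t) = I x f + I x g.
Proof. intros; unfold I; apply (RInt_plus (V:=R_CompleteNormedModule)); apply CR_ex; auto. Qed.
Lemma I_scal x c f : CR f -> I x (fun t => c * f t) = c * I x f.
Proof. intros; unfold I. apply (RInt_scal (V:=R_CompleteNormedModule)); auto using CR_ex. Qed.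
Lemma I_opp x f : CR f -> I x (fun t => - f t) = - I x f.
Proof. intros; unfold I. apply (RInt_opp (V:=R_CompleteNormedModule)); auto using CR_ex. Qed.
Lemma I_minus x f g : CR f -> CR g -> I x (fun t => f t - g t) = I x f - I x g.
Proof. intros; unfold I; apply (RInt_minus (V:=R_CompleteNormedModule)); apply CR_ex; auto. Qed.
Lemma I_ext x f g : (forall t, f t = g t) -> I x f = I x g.
Proof. intros H; unfold I; apply RInt_ext; intros; auto. Qed.
Lemma I_const0 x : I x (fun _ => 0) = 0.
Proof. unfold I. rewrite RInt_const. unfold scal; simpl; unfold mult; simpl. ring. Qed.
Lemma I_le x f g : 0 <= x -> CR f -> CR g ->
  (forall t, 0 <= t <= x -> f t <= g t) -> I x f <= I x g.
Proof. intros. unfold I; apply RInt_le; auto using CR_ex. intros; apply H2; lra. Qed.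
Lemma I_ge0 x f : 0 <= x -> CR f -> (forall t, 0 <= t <= x -> 0 <= f t) -> 0 <= I x f.
Proof. intros. rewrite <- (I_const0 x). apply I_le; auto using CR_const. Qed.
Lemma I_mono x y f : 0 <= x <= y -> CR f -> (forall t, 0 <= t <= y -> 0 <= f t) ->
  I x f <= I y f.
Proof.
  intros Hxy Hf Hp. unfold I.
  rewrite <- (RInt_Chasles f 0 x y); auto using CR_ex.
  assert (0 <= RInt f x y). { apply RInt_ge_0; auto using CR_ex. lra. intros; apply Hp; lra. }
  unfold plus; simpl. lra.
Qed.
Lemma I_bound x f M : 0 <= x -> CR f -> (forall t, 0 <= t <= x -> Rabs (f t) <= M) ->
  Rabs (I x f) <= x * M.
Proof.
  intros. unfold I. replace x with (x - 0) at 2 by ring.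
  apply abs_RInt_le_const; auto using CR_ex.
Qed.

Lemma discr a b c : 0 <= c -> (forall l, 0 <= a - 2 * l * b + l * l * c) -> b * b <= a * c.
Proof.
  intros Hc H. destruct (Req_dec c 0) as [E|E].
  - subst c. destruct (Req_dec b 0) as [Eb|Eb]. subst; nra.
    specialize (H ((a + 1) / (2 * b))). 
    assert (2 * ((a + 1) / (2 * b)) * b = a + 1) by (field; auto). nra.
  - specialize (H (b / c)).
    assert (2 * (b / c) * b = 2 * (b * b / c)) by (field; auto).
    assert (b / c * (b / c) * c = b * b / c) by (field; auto).
    assert (0 <= a - b * b / c) by lra.
    assert (0 < c) by lra.
    apply Rmult_le_reg_r with (/ c). apply Rinv_0_lt_compat; lra.
    replace (a * c * / c) with a by (field; auto).
    unfold Rdiv in *. lra.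
Qed.

Lemma CS x f g : 0 <= x -> CR f -> CR g ->
  I x (fun t => f t * g t) ^ 2 <= I x (fun t => f t ^ 2) * I x (fun t => g t ^ 2).
Proof.
  intros Hx Hf Hg.
  assert (Hfg : CR (fun t => f t * g t)) by (apply CR_mult; auto).
  assert (Hf2 : CR (fun t => f t ^ 2)) by (apply (CR_ext (fun t => f t * f t)); [intros; ring|apply CR_mult; auto]).
  assert (Hg2 : CR (fun t => g t ^ 2)) by (apply (CR_ext (fun t => g t * g t)); [intros; ring|apply CR_mult; auto]).
  rewrite Rmult_comm. replace (I x (fun t => f t * g t) ^ 2) with (I x (fun t => f t * g t) * I x (fun t => f t * g t)) by ring.
  apply discr.
  - apply I_ge0; auto. intros; apply pow2_ge_0.
  - intros l.
    assert (E : I x (fun t => (g t - l * f t) ^ 2) =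
      I x (fun t => g t ^ 2) - 2 * l * I x (fun t => f t * g t) + l * l * I x (fun t => f t ^ 2)).
    { rewrite (I_ext x _ (fun t => (g t ^ 2 - (2 * l) * (f t * g t)) + (l * l) * (f t ^ 2))) by (intros; ring).
      rewrite I_plus, I_minus, !I_scal; auto; try apply CR_scal; auto.
      apply CR_minus; auto. apply CR_scal; auto. }
    rewrite <- E. apply I_ge0; auto.
    apply (CR_ext (fun t => (g t - l * f t) * (g t - l * f t))). intros; ring.
    apply CR_mult; apply CR_minus; auto; apply CR_scal; auto.
    intros; apply pow2_ge_0.
Qed.

Lemma CR_pow2 f : CR f -> CR (fun t => f t ^ 2).
Proof. intros; apply (CR_ext (fun t => f t * f t)); [intros; ring|apply CR_mult; auto]. Qed.

Ltac crt := repeat first [ assumption | apply CR_const | apply CR_id | apply CR_pow2 | apply CR_plus | apply CR_minus | apply CR_mult | apply CR_opp | apply CR_cos | apply CR_sin | apply CR_cosh | apply CR_sinh | apply CR_exp ].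


Lemma int_cos_Z (z : Z) : z <> 0%Z -> I PI (fun t => cos (IZR z * t)) = 0.
Proof.
  intros Hz. assert (Hz' : IZR z <> 0) by (apply not_0_IZR; auto).
  unfold I.
  assert (H := is_RInt_derive (V:=R_CompleteNormedModule) (fun t => sin (IZR z * t) / IZR z) (fun t => cos (IZR z * t)) 0 PI).
  assert (H1 : forall x : R, Rmin 0 PI <= x <= Rmax 0 PI -> is_derive (fun t : R => sin (IZR z * t) / IZR z) x (cos (IZR z * x))).
  { intros t _. auto_derive; auto. field; auto. }
  assert (H2 : forall x : R, Rmin 0 PI <= x <= Rmax 0 PI -> continuous (fun t : R => cos (IZR z * t)) x).
  { intros t _. apply (CR_cos (fun t => IZR z * t)). apply CR_scal, CR_id. }
  rewrite (is_RInt_unique _ _ _ _ (H H1 H2)).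
  rewrite sin_eq_0_1 by (exists z; ring). rewrite Rmult_0_r, sin_0.
  unfold minus, plus, opp; simpl. field; auto.
Qed.

Lemma int_one_PI : I PI (fun _ => 1) = PI.
Proof. unfold I. rewrite RInt_const. unfold scal; simpl; unfold mult; simpl. ring. Qed.

Definition cosf (m : nat) (t : R) := cos (INR (S m) * t).
Definition sinf (m : nat) (t : R) := sin (INR (S m) * t).

Definition Orth (phi : nat -> R -> R) :=
  (forall j, CR (phi j)) /\
  (forall j k, j <> k -> I PI (fun t => phi j t * phi k t) = 0) /\
  (forall j, I PI (fun t => phi j t ^ 2) = PI / 2).

Lemma INR_IZR_S m : INR (S m) = IZR (Z.of_nat (S m)).
Proof. apply INR_IZR_INZ. Qed.

Lemma orth_aux (m k : nat) (s : R) : m <> k ->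
  I PI (fun t => cos ((INR (S m) - INR (S k)) * t)) = 0 /\
  I PI (fun t => cos ((INR (S m) + INR (S k)) * t)) = 0.
Proof.
  intros H. split.
  - rewrite !INR_IZR_S, <- minus_IZR. apply int_cos_Z. lia.
  - rewrite !INR_IZR_S, <- plus_IZR. apply int_cos_Z. lia.
Qed.

Lemma CR_cosl a : CR (fun t => cos (a * t)).
Proof. apply (CR_cos (fun t => a * t)); apply CR_scal, CR_id. Qed.
Lemma CR_sinl a : CR (fun t => sin (a * t)).
Proof. apply (CR_sin (fun t => a * t)); apply CR_scal, CR_id. Qed.

Lemma Orth_cos : Orth cosf.
Proof.
  split; [|split].
  - intros j; apply CR_cosl.
  - intros j k H. destruct (orth_aux j k 0 H) as [H1 H2].
    rewrite (I_ext _ _ (fun t => / 2 * cos ((INR (S j) - INR (S k)) * t) + / 2 * cos ((INR (S j) + INR (S k)) * t))).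
    rewrite I_plus, !I_scal, H1, H2; try ring; try solve [crt].
    intros t. unfold cosf. rewrite Rmult_minus_distr_r, Rmult_plus_distr_r, cos_minus, cos_plus. field.
  - intros j.
    rewrite (I_ext _ _ (fun t => / 2 * 1 + / 2 * cos (IZR (Z.of_nat (S j + S j)) * t))).
    rewrite I_plus, !I_scal, int_cos_Z, int_one_PI; try lia; try field; try solve [crt].
    intros t. unfold cosf. rewrite <- INR_IZR_INZ, plus_INR, Rmult_plus_distr_r, cos_plus.
    pose proof (sin2_cos2 (INR (S j) * t)). unfold Rsqr in *. nra.
Qed.

Lemma Orth_sin : Orth sinf.
Proof.
  split; [|split].
  - intros j; apply CR_sinl.
  - intros j k H. destruct (orth_aux j k 0 H) as [H1 H2].
    rewrite (I_ext _ _ (fun t => / 2 * cos ((INR (S j) - INR (S k)) * t) + (- / 2) * cos ((INR (S j) + INR (S k)) * t))).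
    rewrite I_plus, !I_scal, H1, H2; try ring; try solve [crt].
    intros t. unfold sinf. rewrite Rmult_minus_distr_r, Rmult_plus_distr_r, cos_minus, cos_plus. field.
  - intros j.
    rewrite (I_ext _ _ (fun t => / 2 * 1 + (- / 2) * cos (IZR (Z.of_nat (S j + S j)) * t))).
    rewrite I_plus, !I_scal, int_cos_Z, int_one_PI; try lia; try field; try solve [crt].
    intros t. unfold sinf. rewrite <- INR_IZR_INZ, plus_INR, Rmult_plus_distr_r, cos_plus.
    pose proof (sin2_cos2 (INR (S j) * t)). unfold Rsqr in *. nra.
Qed.

Lemma Orth_shift phi s : Orth phi -> Orth (fun j => phi (s + j)%nat).
Proof.
  intros [H1 [H2 H3]]. split; [|split]; intros; auto. apply H2. lia.
Qed.

Fixpoint rs (f : nat -> R) (n : nat) : R :=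
  match n with O => 0 | S n => rs f n + f n end.

Lemma rs_S f n : rs f (S n) = rs f n + f n.
Proof. reflexivity. Qed.
Lemma rs_ext f g n : (forall k, (k < n)%nat -> f k = g k) -> rs f n = rs g n.
Proof. induction n; simpl; intros; auto. rewrite IHn, H; auto. Qed.
Lemma rs_le f g n : (forall k, (k < n)%nat -> f k <= g k) -> rs f n <= rs g n.
Proof. induction n; simpl; intros; try lra. specialize (IHn (fun k h => H k (Nat.lt_lt_succ_r _ _ h))). specialize (H n (Nat.lt_succ_diag_r n)). lra. Qed.
Lemma rs_ge0 f n : (forall k, (k < n)%nat -> 0 <= f k) -> 0 <= rs f n.
Proof. intros. replace 0 with (rs (fun _ => 0) n). apply rs_le; auto. induction n; simpl; auto. rewrite IHn. ring. intros; apply H; lia. Qed.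
Lemma rs_plus f g n : rs (fun k => f k + g k) n = rs f n + rs g n.
Proof. induction n; simpl; auto. ring. rewrite IHn; ring. Qed.
Lemma rs_scal c f n : rs (fun k => c * f k) n = c * rs f n.
Proof. induction n; simpl; auto. ring. rewrite IHn; ring. Qed.
Lemma rs_split f a b : rs f (a + b) = rs f a + rs (fun k => f (a + k)%nat) b.
Proof. induction b; simpl. rewrite Nat.add_0_r; ring. rewrite Nat.add_succ_r; simpl; rewrite IHb; ring. Qed.
Lemma rs_mono f a b : (forall k, 0 <= f k) -> (a <= b)%nat -> rs f a <= rs f b.
Proof.
  intros H Hab. replace b with (a + (b - a))%nat by lia. rewrite rs_split.
  assert (0 <= rs (fun k => f (a + k)%nat) (b - a)) by (apply rs_ge0; auto). lra.
Qed.

Lemma CR_rs (F : nat -> R -> R) n : (forall k, CR (F k)) -> CR (fun t => rs (fun k => F k t) n).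
Proof.
  intros H; induction n; simpl. apply CR_const. apply CR_plus; auto.
Qed.
Lemma I_rs x (F : nat -> R -> R) n : (forall k, CR (F k)) ->
  I x (fun t => rs (fun k => F k t) n) = rs (fun k => I x (F k)) n.
Proof.
  intros H; induction n; simpl. apply I_const0.
  rewrite I_plus; auto. rewrite IHn; auto. apply CR_rs; auto.
Qed.

Definition Fsum (phi : nat -> R -> R) (b : nat -> R) (M : nat) (t : R) :=
  rs (fun m => b m * phi m t) M.

Lemma Fsum_S phi b M t : Fsum phi b (S M) t = Fsum phi b M t + b M * phi M t.
Proof. reflexivity. Qed.
Lemma CR_Fsum phi b M : (forall j, CR (phi j)) -> CR (Fsum phi b M).
Proof. intros H. unfold Fsum. apply (CR_rs (fun m t => b m * phi m t)). intros; apply CR_scal; auto. Qed.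

Lemma I_Fsum x h phi b M : CR h -> (forall j, CR (phi j)) ->
  I x (fun t => h t * Fsum phi b M t) = rs (fun m => b m * I x (fun t => h t * phi m t)) M.
Proof.
  intros Hh Hp. unfold Fsum.
  rewrite (I_ext _ _ (fun t => rs (fun k => b k * (h t * phi k t)) M)).
  rewrite (I_rs x (fun k t => b k * (h t * phi k t))). apply rs_ext; intros. apply I_scal.
  apply CR_mult; auto. intros; apply CR_scal, CR_mult; auto.
  intros t. rewrite <- rs_scal. apply rs_ext; intros; ring.
Qed.

Lemma synth_pi phi b M : Orth phi ->
  I PI (fun t => Fsum phi b M t ^ 2) = PI / 2 * rs (fun m => b m ^ 2) M.
Proof.
  intros [Hc [Ho Hn]].
  assert (Hz : forall M j, (M <= j)%nat -> I PI (fun t => Fsum phi b M t * phi j t) = 0).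
  { intros M0 j Hj. rewrite (I_ext _ _ (fun t => phi j t * Fsum phi b M0 t)) by (intros; ring).
    rewrite I_Fsum; auto. rewrite (rs_ext _ (fun _ => 0)). clear; induction M0; simpl; auto; lra.
    intros k Hk. rewrite (I_ext _ _ (fun t => phi k t * phi j t)) by (intros; ring). rewrite Ho. ring. lia. }
  induction M.
  - simpl. unfold Fsum; simpl. rewrite (I_ext _ _ (fun _ => 0)) by (intros; ring). rewrite I_const0; ring.
  - rewrite rs_S. rewrite (I_ext _ _ (fun t => Fsum phi b M t ^ 2 + (2 * b M) * (Fsum phi b M t * phi M t) + (b M ^ 2) * (phi M t ^ 2))).
    assert (CR (Fsum phi b M)) by (apply CR_Fsum; auto).
    assert (CR (phi M)) by auto.
    rewrite !I_plus, !I_scal, IHM, Hz, Hn; auto; try ring; try solve [crt].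
    intros t. rewrite Fsum_S. ring.
Qed.

Lemma synth phi b M x : Orth phi -> 0 <= x <= PI ->
  I x (fun t => Fsum phi b M t ^ 2) <= PI / 2 * rs (fun m => b m ^ 2) M.
Proof.
  intros HO Hx. rewrite <- (synth_pi phi b M); auto. destruct HO as [Hc _].
  apply I_mono; auto. apply CR_pow2, CR_Fsum; auto. intros; apply pow2_ge_0.
Qed.

Lemma bessel phi h M x : Orth phi -> 0 <= x <= PI -> CR h ->
  rs (fun m => I x (fun t => h t * phi m t) ^ 2) M <= PI / 2 * I x (fun t => h t ^ 2).
Proof.
  intros HO Hx Hh. pose proof HO as [Hc _].
  set (b := fun m => I x (fun t => h t * phi m t)).
  set (S := rs (fun m => I x (fun t => h t * phi m t) ^ 2) M).
  assert (HF : CR (Fsum phi b M)) by (apply CR_Fsum; auto).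
  assert (E1 : I x (fun t => h t * Fsum phi b M t) = S).
  { rewrite I_Fsum; auto. unfold S, b. apply rs_ext. intros; ring. }
  assert (E2 := synth phi b M x HO Hx).
  assert (ES : rs (fun m => b m ^ 2) M = S) by reflexivity.
  rewrite ES in E2.
  set (l := 2 / PI).
  assert (E3 : 0 <= I x (fun t => (h t - l * Fsum phi b M t) ^ 2)).
  { apply I_ge0; try lra. crt. intros; apply pow2_ge_0. }
  rewrite (I_ext _ _ (fun t => h t ^ 2 + (- 2 * l) * (h t * Fsum phi b M t) + (l * l) * (Fsum phi b M t ^ 2))) in E3 by (intros; ring).
  rewrite !I_plus, !I_scal, E1 in E3; try solve [crt].
  assert (HP := PI_RGT_0).
  assert (Hl : 0 < l) by (unfold l; apply Rdiv_lt_0_compat; lra).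
  assert (l * l * I x (fun t => Fsum phi b M t ^ 2) <= l * l * (PI / 2 * S)).
  { apply Rmult_le_compat_l; auto. nra. }
  assert (E4 : l * l * (PI / 2 * S) = l * S) by (unfold l; field; lra).
  assert (E5 : PI / 2 * l = 1) by (unfold l; field; lra).
  assert (l * S <= I x (fun t => h t ^ 2)) by lra.
  replace S with (PI / 2 * (l * S)) by (rewrite <- Rmult_assoc, E5; ring).
  apply Rmult_le_compat_l; lra.
Qed.


Lemma mvt0 (f f' : R -> R) s : (forall c, is_derive f c (f' c)) ->
  exists c, Rabs c <= Rabs s /\ Rabs (f s - f 0) = Rabs (f' c) * Rabs s.
Proof.
  intros H. destruct (MVT_abs f f' 0 s) as [c [E Hc]].
  intros c _. apply is_derive_Reals. apply H.
  exists c. split. unfold Rmin, Rmax in Hc. destruct (Rle_dec 0 s); unfold Rabs; repeat destruct Rcase_abs; lra.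
  rewrite E. f_equal. f_equal. ring.
Qed.

Lemma sin_le_abs y : Rabs (sin y) <= Rabs y.
Proof.
  destruct (mvt0 sin cos y) as [c [_ E]]. intros; auto_derive; auto; ring.
  rewrite sin_0, Rminus_0_r in E. rewrite E.
  pose proof (COS_bound c). assert (Rabs (cos c) <= 1) by (unfold Rabs; destruct Rcase_abs; lra).
  pose proof (Rabs_pos y). nra.
Qed.

Lemma cos1_le y : Rabs (cos y - 1) <= y ^ 2.
Proof.
  destruct (mvt0 cos (fun c => - sin c) y) as [c [Hc E]]. intros; auto_derive; auto; ring.
  rewrite cos_0 in E. rewrite E, Rabs_Ropp.
  pose proof (sin_le_abs c). pose proof (Rabs_pos y). pose proof (Rabs_pos c).
  replace (y ^ 2) with (Rabs y * Rabs y) by (rewrite <- Rabs_mult; rewrite Rabs_right; [ring|nra]).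
  nra.
Qed.

Lemma sin1_le y L : Rabs y <= L -> Rabs (sin y - y) <= L * y ^ 2.
Proof.
  intros Hy.
  destruct (mvt0 (fun y => sin y - y) (fun c => cos c - 1) y) as [c [Hc E]]. intros; auto_derive; auto; ring.
  rewrite sin_0 in E. replace (sin y - y - (0 - 0)) with (sin y - y) in E by ring. rewrite E.
  pose proof (cos1_le c). pose proof (Rabs_pos y). pose proof (Rabs_pos c).
  assert (c ^ 2 <= y ^ 2) by (rewrite <- (pow2_abs c), <- (pow2_abs y); nra).
  replace (y ^ 2) with (Rabs y * Rabs y) in * by (rewrite <- Rabs_mult; rewrite Rabs_right; [ring|nra]).
  nra.
Qed.

Lemma exp_le_of x y : x <= y -> exp x <= exp y.
Proof. intros H. destruct (Req_dec x y). subst; lra. apply Rlt_le, exp_increasing; lra. Qed.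

Lemma exp_abs_le c L : Rabs c <= L -> exp c <= exp L /\ exp (- c) <= exp L.
Proof.
  intros H. split; apply exp_le_of; unfold Rabs in H; destruct Rcase_abs; lra.
Qed.

Lemma cosh_le c L : Rabs c <= L -> Rabs (cosh c) <= exp L.
Proof.
  intros H. destruct (exp_abs_le c L H). unfold cosh.
  pose proof (exp_pos c). pose proof (exp_pos (- c)).
  rewrite Rabs_right; lra.
Qed.
Lemma sinh_le c L : Rabs c <= L -> Rabs (sinh c) <= exp L.
Proof.
  intros H. destruct (exp_abs_le c L H). unfold sinh.
  pose proof (exp_pos c). pose proof (exp_pos (- c)).
  unfold Rabs; destruct Rcase_abs; lra.
Qed.

Lemma is_derive_sinh c : is_derive sinh c (cosh c).
Proof. unfold sinh, cosh. auto_derive; auto. field. Qed.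
Lemma is_derive_cosh c : is_derive cosh c (sinh c).
Proof. unfold sinh, cosh. auto_derive; auto. field. Qed.

Lemma sinh_le_lin y L : Rabs y <= L -> Rabs (sinh y) <= exp L * Rabs y.
Proof.
  intros Hy. destruct (mvt0 sinh cosh y) as [c [Hc E]]. apply is_derive_sinh.
  rewrite sinh_0, Rminus_0_r in E. rewrite E.
  pose proof (cosh_le c L ltac:(lra)). pose proof (Rabs_pos y). nra.
Qed.

Lemma cosh1_le y L : Rabs y <= L -> Rabs (cosh y - 1) <= exp L * y ^ 2.
Proof.
  intros Hy. destruct (mvt0 cosh sinh y) as [c [Hc E]]. apply is_derive_cosh.
  rewrite cosh_0 in E. rewrite E.
  pose proof (sinh_le_lin c L ltac:(lra)). pose proof (Rabs_pos y). pose proof (Rabs_pos c).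
  pose proof (exp_pos L).
  replace (y ^ 2) with (Rabs y * Rabs y) by (rewrite <- Rabs_mult; rewrite Rabs_right; [ring|nra]).
  assert (Rabs (sinh c) <= exp L * Rabs y) by nra.
  nra.
Qed.

Lemma sinh1_le y L : Rabs y <= L -> Rabs (sinh y - y) <= L * exp L * y ^ 2.
Proof.
  intros Hy.
  destruct (mvt0 (fun y => sinh y - y) (fun c => cosh c - 1) y) as [c [Hc E]].
  intros c. apply (is_derive_minus sinh (fun y => y)). apply is_derive_sinh.
  apply (is_derive_id (K:=R_AbsRing)).
  rewrite sinh_0 in E. replace (sinh y - y - (0 - 0)) with (sinh y - y) in E by ring. rewrite E.
  pose proof (cosh1_le c L ltac:(lra)). pose proof (Rabs_pos y). pose proof (Rabs_pos c).
  pose proof (exp_pos L).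
  assert (c ^ 2 <= L * Rabs y) by (rewrite <- (pow2_abs c); nra).
  replace (y ^ 2) with (Rabs y * Rabs y) by (rewrite <- Rabs_mult; rewrite Rabs_right; [ring|nra]).
  assert (Rabs (cosh c - 1) <= exp L * (L * Rabs y)) by nra.
  nra.
Qed.

Lemma Cmod_comp z : Cmod z <= Rabs (fst z) + Rabs (snd z).
Proof.
  pose proof (Cmod2_alt z). pose proof (Cmod_ge_0 z).
  pose proof (Rabs_pos (fst z)). pose proof (Rabs_pos (snd z)).
  unfold Re, Im in H. rewrite <- (pow2_abs (fst z)), <- (pow2_abs (snd z)) in H.
  nra.
Qed.
Lemma fst_le_Cmod z : Rabs (fst z) <= Cmod z.
Proof. pose proof (Rmax_Cmod z). pose proof (Rmax_l (Rabs (fst z)) (Rabs (snd z))). lra. Qed.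
Lemma snd_le_Cmod z : Rabs (snd z) <= Cmod z.
Proof. pose proof (Rmax_Cmod z). pose proof (Rmax_r (Rabs (fst z)) (Rabs (snd z))). lra. Qed.

Definition ccf (z : C) (t : R) : C := Ccos (Cmult z (RtoC t)).

Lemma ccf_eq z t : ccf z t = (cos (fst z * t) * cosh (snd z * t), - (sin (fst z * t) * sinh (snd z * t))).
Proof.
  destruct z as [a b]. unfold ccf, Ccos, Cmult, RtoC; simpl.
  replace (a * t - b * 0) with (a * t) by ring. replace (a * 0 + b * t) with (b * t) by ring. reflexivity.
Qed.
Lemma ccf_fst z t : fst (ccf z t) = cos (fst z * t) * cosh (snd z * t).
Proof. rewrite ccf_eq; reflexivity. Qed.
Lemma ccf_snd z t : snd (ccf z t) = - (sin (fst z * t) * sinh (snd z * t)).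
Proof. rewrite ccf_eq; reflexivity. Qed.

Lemma abs_mul_le u v A B : Rabs u <= A -> Rabs v <= B -> Rabs (u * v) <= A * B.
Proof. intros. rewrite Rabs_mult. apply Rmult_le_compat; auto using Rabs_pos. Qed.

Lemma cos_abs1 y : Rabs (cos y) <= 1.
Proof. pose proof (COS_bound y). unfold Rabs; destruct Rcase_abs; lra. Qed.
Lemma sin_abs1 y : Rabs (sin y) <= 1.
Proof. pose proof (SIN_bound y). unfold Rabs; destruct Rcase_abs; lra. Qed.

Definition KK (L : R) := (1 + L) * (1 + 2 * exp L).

Lemma taylor2 m al be L : Rabs al <= L -> Rabs be <= L ->
  Rabs (cos (m + al) * cosh be - cos m + al * sin m) <= KK L * (al ^ 2 + be ^ 2) /\
  Rabs (- (sin (m + al) * sinh be) + be * sin m) <= KK L * (al ^ 2 + be ^ 2).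
Proof.
  intros Ha Hb. set (E := exp L). assert (HE : 0 < E) by apply exp_pos.
  assert (HL : 0 <= L) by (pose proof (Rabs_pos al); lra).
  pose proof (cos1_le al) as B1. pose proof (sin1_le al L Ha) as B2.
  pose proof (sin_le_abs al) as B3. pose proof (cosh_le be L Hb) as B4.
  pose proof (sinh_le be L Hb) as B4'.
  pose proof (cosh1_le be L Hb) as B5. pose proof (sinh1_le be L Hb) as B6.
  pose proof (sinh_le_lin be L Hb) as B7.
  fold E in B4, B4', B5, B6, B7.
  pose proof (cos_abs1 m). pose proof (sin_abs1 m). pose proof (cos_abs1 al).
  assert (Ha2 : 0 <= al ^ 2) by apply pow2_ge_0. assert (Hb2 : 0 <= be ^ 2) by apply pow2_ge_0.
  assert (Hab : Rabs al * Rabs be <= al ^ 2 + be ^ 2).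
  { rewrite <- (pow2_abs al), <- (pow2_abs be). pose proof (Rabs_pos al). pose proof (Rabs_pos be). nra. }
  rewrite cos_plus, sin_plus. split.
  - set (X := cos al * cosh be - 1). set (Y := sin al * cosh be - al).
    replace (cos m * cos al - sin m * sin al) with (cos m * cos al - sin m * sin al) by ring.
    replace ((cos m * cos al - sin m * sin al) * cosh be - cos m + al * sin m) with (cos m * X - sin m * Y) by (unfold X, Y; ring).
    assert (HX : Rabs X <= E * al ^ 2 + E * be ^ 2).
    { unfold X. replace (cos al * cosh be - 1) with ((cos al - 1) * cosh be + (cosh be - 1)) by ring.
      eapply Rle_trans. apply Rabs_triang. pose proof (abs_mul_le _ _ _ _ B1 B4). nra. }
    assert (HY : Rabs Y <= L * al ^ 2 + L * E * be ^ 2).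
    { unfold Y. replace (sin al * cosh be - al) with ((sin al - al) + sin al * (cosh be - 1)) by ring.
      eapply Rle_trans. apply Rabs_triang.
      assert (Rabs (sin al) <= L) by lra.
      pose proof (abs_mul_le _ _ _ _ H2 B5). nra. }
    unfold Rminus. eapply Rle_trans. apply Rabs_triang. rewrite Rabs_Ropp.
    pose proof (abs_mul_le _ _ _ _ H HX). pose proof (abs_mul_le _ _ _ _ H0 HY).
    apply Rle_trans with (E * al ^ 2 + E * be ^ 2 + (L * al ^ 2 + L * E * be ^ 2)); [lra|].
    assert (0 <= L * E * al ^ 2) by (apply Rmult_le_pos; [apply Rmult_le_pos|]; lra).
    assert (0 <= L * E * be ^ 2) by (apply Rmult_le_pos; [apply Rmult_le_pos|]; lra).
    assert (0 <= L * al ^ 2) by (apply Rmult_le_pos; lra).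
    assert (0 <= L * be ^ 2) by (apply Rmult_le_pos; lra).
    assert (0 <= E * al ^ 2) by (apply Rmult_le_pos; lra).
    assert (0 <= E * be ^ 2) by (apply Rmult_le_pos; lra).
    unfold KK; try fold E.
    replace ((1 + L) * (1 + 2 * E) * (al ^ 2 + be ^ 2)) with (al ^ 2 + be ^ 2 + 2 * (E * al ^ 2) + 2 * (E * be ^ 2) + L * al ^ 2 + L * be ^ 2 + 2 * (L * E * al ^ 2) + 2 * (L * E * be ^ 2)) by ring.
    lra.
  - set (Z := cos al * sinh be - be). set (W := sin al * sinh be).
    replace (- ((sin m * cos al + cos m * sin al) * sinh be) + be * sin m) with (- (sin m * Z) - cos m * W) by (unfold Z, W; ring).
    assert (HZ : Rabs Z <= E * al ^ 2 + L * E * be ^ 2).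
    { unfold Z. replace (cos al * sinh be - be) with ((cos al - 1) * sinh be + (sinh be - be)) by ring.
      eapply Rle_trans. apply Rabs_triang. pose proof (abs_mul_le _ _ _ _ B1 B4'). nra. }
    assert (HW : Rabs W <= E * (al ^ 2 + be ^ 2)).
    { unfold W. rewrite Rabs_mult. pose proof (Rabs_pos (sin al)). pose proof (Rabs_pos be).
      assert (Rabs (sin al) * Rabs (sinh be) <= Rabs al * (E * Rabs be)) by (apply Rmult_le_compat; auto using Rabs_pos).
      nra. }
    unfold Rminus. eapply Rle_trans. apply Rabs_triang. rewrite !Rabs_Ropp.
    pose proof (abs_mul_le _ _ _ _ H0 HZ). pose proof (abs_mul_le _ _ _ _ H HW).
    assert (0 <= L * E * al ^ 2) by (apply Rmult_le_pos; [apply Rmult_le_pos|]; lra).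
    assert (0 <= L * E * be ^ 2) by (apply Rmult_le_pos; [apply Rmult_le_pos|]; lra).
    assert (0 <= L * al ^ 2) by (apply Rmult_le_pos; lra).
    assert (0 <= L * be ^ 2) by (apply Rmult_le_pos; lra).
    assert (0 <= E * al ^ 2) by (apply Rmult_le_pos; lra).
    assert (0 <= E * be ^ 2) by (apply Rmult_le_pos; lra).
    unfold KK; try fold E.
    replace ((1 + L) * (1 + 2 * E) * (al ^ 2 + be ^ 2)) with (al ^ 2 + be ^ 2 + 2 * (E * al ^ 2) + 2 * (E * be ^ 2) + L * al ^ 2 + L * be ^ 2 + 2 * (L * E * al ^ 2) + 2 * (L * E * be ^ 2)) by ring.
    replace (E * (al ^ 2 + be ^ 2)) with (E * al ^ 2 + E * be ^ 2) in * by ring.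
    lra.
Qed.

Definition C2c (Om : R) := 2 * KK (PI * Om) * PI ^ 2.
Definition C1c (Om : R) := C2c Om * Om + PI.

Lemma KK_pos L : 0 <= L -> 0 < KK L.
Proof. intros. unfold KK. pose proof (exp_pos L). nra. Qed.

Lemma abs_mul_t a t Om k : 0 <= t <= PI -> Rabs a <= Cmod k -> Cmod k <= Om -> Rabs (a * t) <= PI * Om.
Proof.
  intros Ht Ha Hk. rewrite Rabs_mult. rewrite (Rabs_right t) by lra.
  pose proof (Rabs_pos a). pose proof PI_RGT_0. nra.
Qed.

Lemma ccf_t2 (m : R) (k : C) (t Om : R) : 0 <= t <= PI -> Cmod k <= Om ->
  Cmod (Cplus (Cminus (ccf (Cplus (RtoC m) k) t) (RtoC (cos (m * t)))) (Cmult k (RtoC (t * sin (m * t)))))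
    <= C2c Om * Cmod k ^ 2.
Proof.
  intros Ht Hk. destruct k as [a b].
  assert (Ha : Rabs (a * t) <= PI * Om) by (apply (abs_mul_t a t Om (a, b)); auto; apply (fst_le_Cmod (a, b))).
  assert (Hb : Rabs (b * t) <= PI * Om) by (apply (abs_mul_t b t Om (a, b)); auto; apply (snd_le_Cmod (a, b))).
  destruct (taylor2 (m * t) (a * t) (b * t) (PI * Om) Ha Hb) as [T1 T2].
  eapply Rle_trans. apply Cmod_comp.
  assert (E1 : fst (Cplus (Cminus (ccf (Cplus (RtoC m) (a, b)) t) (RtoC (cos (m * t)))) (Cmult (a, b) (RtoC (t * sin (m * t)))))
     = cos (m * t + a * t) * cosh (b * t) - cos (m * t) + a * t * sin (m * t)).
  { unfold Cplus, Cminus, Cmult, RtoC, Copp; simpl.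
    replace ((m + a) * t - (0 + b) * 0) with (m*t + a*t) by ring. replace ((m + a) * 0 + (0 + b) * t) with (b*t) by ring. ring. }
  assert (E2 : snd (Cplus (Cminus (ccf (Cplus (RtoC m) (a, b)) t) (RtoC (cos (m * t)))) (Cmult (a, b) (RtoC (t * sin (m * t)))))
     = - (sin (m * t + a * t) * sinh (b * t)) + b * t * sin (m * t)).
  { unfold Cplus, Cminus, Cmult, RtoC, Copp; simpl.
    replace ((m + a) * t - (0 + b) * 0) with (m*t + a*t) by ring. replace ((m + a) * 0 + (0 + b) * t) with (b*t) by ring. ring. }
  rewrite E1, E2.
  assert (Eab : (a * t) ^ 2 + (b * t) ^ 2 = t ^ 2 * Cmod (a, b) ^ 2).
  { rewrite Cmod2_alt. unfold Re, Im; simpl. ring. }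
  rewrite Eab in T1, T2.
  assert (Ht2 : t ^ 2 <= PI ^ 2) by (pose proof PI_RGT_0; nra).
  assert (HK := KK_pos (PI * Om)).
  assert (0 <= PI * Om) by (pose proof PI_RGT_0; pose proof (Cmod_ge_0 (a,b)); nra).
  specialize (HK H).
  assert (KK (PI * Om) * (t ^ 2 * Cmod (a, b) ^ 2) <= KK (PI * Om) * (PI ^ 2 * Cmod (a, b) ^ 2)).
  { apply Rmult_le_compat_l; [lra|]. apply Rmult_le_compat_r; [apply pow2_ge_0|lra]. }
  unfold C2c. lra.
Qed.

Lemma ccf_t1 (m : R) (k : C) (t Om : R) : 0 <= t <= PI -> Cmod k <= Om ->
  Cmod (Cminus (ccf (Cplus (RtoC m) k) t) (RtoC (cos (m * t)))) <= C1c Om * Cmod k.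
Proof.
  intros Ht Hk.
  set (r := Cplus (Cminus (ccf (Cplus (RtoC m) k) t) (RtoC (cos (m * t)))) (Cmult k (RtoC (t * sin (m * t))))).
  replace (Cminus (ccf (Cplus (RtoC m) k) t) (RtoC (cos (m * t)))) with (Cminus r (Cmult k (RtoC (t * sin (m * t))))) by (unfold r; field).
  unfold Cminus. eapply Rle_trans. apply Cmod_triangle. rewrite Cmod_opp, Cmod_mult, Cmod_R.
  pose proof (ccf_t2 m k t Om Ht Hk). fold r in H.
  assert (Rabs (t * sin (m * t)) <= PI).
  { rewrite Rabs_mult, (Rabs_right t) by lra. pose proof (sin_abs1 (m * t)). pose proof (Rabs_pos (sin (m*t))). nra. }
  pose proof (Cmod_ge_0 k).
  assert (0 <= C2c Om).
  { unfold C2c. pose proof PI_RGT_0.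
    assert (HO : 0 <= PI * Om) by nra. pose proof (KK_pos (PI * Om) HO). nra. }
  assert (C2c Om * Cmod k ^ 2 <= C2c Om * Om * Cmod k) by (apply Rle_trans with (C2c Om * (Om * Cmod k)); [apply Rmult_le_compat_l; nra| lra]).
  unfold C1c. nra.
Qed.

Lemma ccf_bound (z : C) (t Om : R) : 0 <= t <= PI -> Rabs (snd z) <= Om ->
  Cmod (ccf z t) <= 2 * exp (PI * Om).
Proof.
  intros Ht Hz. eapply Rle_trans. apply Cmod_comp. rewrite ccf_fst, ccf_snd.
  assert (Rabs (snd z * t) <= PI * Om).
  { rewrite Rabs_mult, (Rabs_right t) by lra. pose proof (Rabs_pos (snd z)). pose proof PI_RGT_0. nra. }
  pose proof (cosh_le _ _ H). pose proof (sinh_le _ _ H).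
  pose proof (abs_mul_le _ _ _ _ (cos_abs1 (fst z * t)) H0).
  pose proof (abs_mul_le _ _ _ _ (sin_abs1 (fst z * t)) H1).
  rewrite Rabs_Ropp. lra.
Qed.


Definition CC (G : R -> C) := CR (fun t => fst (G t)) /\ CR (fun t => snd (G t)).
Definition RI (x : R) (G : R -> C) : C := @RInt C_R_CompleteNormedModule G 0 x.

Lemma RI_comp x G : CC G -> RI x G = (I x (fun t => fst (G t)), I x (fun t => snd (G t))).
Proof.
  intros [H1 H2]. unfold RI, I.
  apply (is_RInt_unique (V:=C_R_CompleteNormedModule)).
  apply (is_RInt_fct_extend_pair (U:=R_NormedModule) (V:=R_NormedModule));
  apply (RInt_correct (V:=R_CompleteNormedModule)); apply CR_ex; auto.
Qed.

Lemma RI_ext x F G : (forall t, F t = G t) -> RI x F = RI x G.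
Proof. intros H. unfold RI. apply (RInt_ext (V:=C_R_CompleteNormedModule)). intros; auto. Qed.

Lemma CC_ext F G : (forall t, F t = G t) -> CC F -> CC G.
Proof.
  intros H [H1 H2]. split.
  apply (CR_ext (fun t => fst (F t))); auto. intros; rewrite H; auto.
  apply (CR_ext (fun t => snd (F t))); auto. intros; rewrite H; auto.
Qed.
Lemma CC_plus F G : CC F -> CC G -> CC (fun t => Cplus (F t) (G t)).
Proof. intros [] []; split; simpl; crt. Qed.
Lemma CC_minus F G : CC F -> CC G -> CC (fun t => Cminus (F t) (G t)).
Proof. intros [] []; split; simpl; crt. Qed.
Lemma CC_mult F G : CC F -> CC G -> CC (fun t => Cmult (F t) (G t)).
Proof. intros [] []; split; simpl; crt. Qed.
Lemma CC_const c : CC (fun _ => c).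
Proof. split; apply CR_const. Qed.
Lemma CC_RtoC f : CR f -> CC (fun t => RtoC (f t)).
Proof. intros; split; simpl; crt. Qed.
Lemma CC_ccf z : CC (ccf z).
Proof.
  split; [apply (CR_ext (fun t => cos (fst z * t) * cosh (snd z * t)))|apply (CR_ext (fun t => - (sin (fst z * t) * sinh (snd z * t))))];
  intros; try (rewrite ccf_fst || rewrite ccf_snd); auto.
  apply CR_mult; [apply CR_cosl|apply (CR_cosh (fun t => snd z * t)); apply CR_scal, CR_id].
  apply CR_opp, CR_mult; [apply CR_sinl|apply (CR_sinh (fun t => snd z * t)); apply CR_scal, CR_id].
Qed.

Lemma RI_plus x F G : CC F -> CC G -> RI x (fun t => Cplus (F t) (G t)) = Cplus (RI x F) (RI x G).
Proof.
  intros HF HG. rewrite !RI_comp; auto using CC_plus. destruct HF, HG.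
  unfold Cplus; simpl. rewrite !I_plus; auto.
Qed.
Lemma RI_minus x F G : CC F -> CC G -> RI x (fun t => Cminus (F t) (G t)) = Cminus (RI x F) (RI x G).
Proof.
  intros HF HG. rewrite !RI_comp; auto using CC_minus. destruct HF, HG.
  unfold Cminus, Cplus, Copp; simpl. rewrite !I_plus, !I_opp; auto; crt.
Qed.
Lemma RI_cmul x c G : CC G -> RI x (fun t => Cmult c (G t)) = Cmult c (RI x G).
Proof.
  intros HG. rewrite !RI_comp; auto. 2: apply CC_mult; auto using CC_const. destruct HG.
  unfold Cmult; simpl.
  rewrite (I_ext _ _ (fun t => fst c * fst (G t) + (- snd c) * snd (G t))) by (intros; ring).
  rewrite !I_plus, !I_scal; try solve [crt]. f_equal; ring.
Qed.

Fixpoint cs (f : nat -> C) (n : nat) : C :=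
  match n with O => RtoC 0 | S n => Cplus (cs f n) (f n) end.

Lemma cs_ext f g n : (forall k, (k < n)%nat -> f k = g k) -> cs f n = cs g n.
Proof. induction n; simpl; intros; auto. rewrite IHn, H; auto. Qed.

Lemma CC_cs (F : nat -> R -> C) n : (forall k, CC (F k)) -> CC (fun t => cs (fun k => F k t) n).
Proof. intros H; induction n; simpl. apply CC_const. apply CC_plus; auto. Qed.

Lemma RI_cs x (F : nat -> R -> C) n : (forall k, CC (F k)) ->
  RI x (fun t => cs (fun k => F k t) n) = cs (fun k => RI x (F k)) n.
Proof.
  intros H; induction n; simpl.
  - rewrite RI_comp by apply CC_const. simpl. rewrite I_const0. reflexivity.
  - rewrite RI_plus; auto. rewrite IHn; auto. apply CC_cs; auto.
Qed.

Lemma cs_fst f n : fst (cs f n) = rs (fun k => fst (f k)) n.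
Proof. induction n; simpl; auto. rewrite IHn; auto. Qed.
Lemma cs_snd f n : snd (cs f n) = rs (fun k => snd (f k)) n.
Proof. induction n; simpl; auto. rewrite IHn; auto. Qed.

Lemma cs_plus f g n : cs (fun k => Cplus (f k) (g k)) n = Cplus (cs f n) (cs g n).
Proof. induction n; simpl. apply injective_projections; simpl; ring. rewrite IHn. field. Qed.

Lemma Cmod_cs f n : Cmod (cs f n) <= rs (fun k => Cmod (f k)) n.
Proof.
  induction n; simpl. rewrite Cmod_0; lra.
  eapply Rle_trans. apply Cmod_triangle. lra.
Qed.

Definition NC (x : R) (G : R -> C) : R := I x (fun t => fst (G t) ^ 2) + I x (fun t => snd (G t) ^ 2).

Lemma NC_ge0 x G : 0 <= x -> CC G -> 0 <= NC x G.
Proof.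
  intros Hx [H1 H2]. unfold NC.
  assert (0 <= I x (fun t => fst (G t) ^ 2)) by (apply I_ge0; auto; crt; intros; apply pow2_ge_0).
  assert (0 <= I x (fun t => snd (G t) ^ 2)) by (apply I_ge0; auto; crt; intros; apply pow2_ge_0).
  lra.
Qed.

Lemma NC_sup x G S : 0 <= x -> CC G -> (forall t, 0 <= t <= x -> Cmod (G t) <= S) -> NC x G <= x * S ^ 2.
Proof.
  intros Hx [H1 H2] HS. unfold NC. rewrite <- I_plus by crt.
  replace (x * S ^ 2) with (I x (fun _ => S ^ 2)).
  apply I_le; auto; crt. intros t Ht. specialize (HS t Ht).
  pose proof (Cmod2_alt (G t)). unfold Re, Im in H. pose proof (Cmod_ge_0 (G t)).
  rewrite <- H. apply pow_incr. lra.
  unfold I. rewrite RInt_const. unfold scal; simpl; unfold mult; simpl. ring.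
Qed.

Lemma NC_plus x F G : 0 <= x -> CC F -> CC G ->
  NC x (fun t => Cplus (F t) (G t)) <= 2 * NC x F + 2 * NC x G.
Proof.
  intros Hx [F1 F2] [G1 G2]. unfold NC. unfold Cplus, Re, Im; cbn [fst snd].
  replace (2 * (I x (fun t => fst (F t) ^ 2) + I x (fun t => snd (F t) ^ 2)) + 2 * (I x (fun t => fst (G t) ^ 2) + I x (fun t => snd (G t) ^ 2)))
    with (I x (fun t => 2 * fst (F t) ^ 2 + 2 * fst (G t) ^ 2) + I x (fun t => 2 * snd (F t) ^ 2 + 2 * snd (G t) ^ 2)).
  apply Rplus_le_compat; apply I_le; auto; crt; intros t _; match goal with |- (?a + ?b) ^ 2 <= _ => pose proof (pow2_ge_0 (a - b)); nra end.
  rewrite !I_plus, !I_scal; try solve [crt]. ring.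
Qed.

Lemma NC_ext x F G : (forall t, F t = G t) -> NC x F = NC x G.
Proof. intros H; unfold NC. f_equal; apply I_ext; intros; rewrite H; auto. Qed.

Lemma RI_CS x U G : 0 <= x -> CC U -> CC G ->
  Cmod (RI x (fun t => Cmult (U t) (G t))) ^ 2 <= 2 * NC x U * NC x G.
Proof.
  intros Hx HU HG. rewrite RI_comp by (apply CC_mult; auto).
  destruct HU as [U1 U2], HG as [G1 G2].
  rewrite Cmod2_alt. unfold Re, Im; simpl.
  rewrite !I_minus, !I_plus by crt.
  pose proof (CS x _ _ Hx U1 G1). pose proof (CS x _ _ Hx U2 G2).
  pose proof (CS x _ _ Hx U1 G2). pose proof (CS x _ _ Hx U2 G1).
  unfold NC.
  set (a := I x (fun t => fst (U t) * fst (G t))) in *.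
  set (b := I x (fun t => snd (U t) * snd (G t))) in *.
  set (c := I x (fun t => fst (U t) * snd (G t))) in *.
  set (d := I x (fun t => snd (U t) * fst (G t))) in *.
  assert (Hab : (a - b) ^ 2 <= 2 * a ^ 2 + 2 * b ^ 2) by (pose proof (pow2_ge_0 (a + b)); nra).
  assert (Hcd : (c + d) ^ 2 <= 2 * c ^ 2 + 2 * d ^ 2) by (pose proof (pow2_ge_0 (c - d)); nra).
  set (A1 := I x (fun t => fst (U t) ^ 2)) in *. set (A2 := I x (fun t => snd (U t) ^ 2)) in *.
  set (B1 := I x (fun t => fst (G t) ^ 2)) in *. set (B2 := I x (fun t => snd (G t) ^ 2)) in *.
  replace (2 * (A1 + A2) * (B1 + B2)) with (2*(A1*B1) + 2*(A2*B2) + 2*(A1*B2) + 2*(A2*B1)) by ring.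
  lra.
Qed.


Lemma sqrt_sq_abs a : sqrt (a * a) = Rabs a.
Proof. rewrite <- sqrt_Rsqr_abs. unfold Rsqr. reflexivity. Qed.

Lemma csqrt_sq r : csqrt (Cmult r r) = r \/ csqrt (Cmult r r) = Copp r.
Proof.
  destruct r as [a b]. unfold csqrt, Cmult, Cmod, Copp, Re, Im; cbn [fst snd].
  assert (E : sqrt ((a * a - b * b) ^ 2 + (a * b + b * a) ^ 2) = a * a + b * b).
  { replace ((a * a - b * b) ^ 2 + (a * b + b * a) ^ 2) with ((a * a + b * b) * (a * a + b * b)) by ring.
    rewrite sqrt_square; auto. nra. }
  rewrite E.
  replace ((a * a + b * b + (a * a - b * b)) / 2) with (a * a) by field.
  replace ((a * a + b * b - (a * a - b * b)) / 2) with (b * b) by field.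
  rewrite !sqrt_sq_abs.
  destruct (Rlt_dec 0 (a * b + b * a)) as [H|H].
  - destruct (Rle_dec 0 a).
    + left. assert (0 < b) by nra. rewrite !Rabs_right by lra. auto.
    + right. assert (b < 0) by nra. rewrite Rabs_left by lra. rewrite Rabs_left by lra. auto.
  - apply Rnot_lt_le in H. destruct (Rlt_dec 0 a).
    + left. assert (b <= 0) by nra. rewrite Rabs_right by lra. unfold Rabs; destruct Rcase_abs; f_equal; lra.
    + destruct (Req_dec a 0).
      * subst. rewrite Rabs_R0. destruct (Rle_dec 0 b).
        -- right. rewrite (Rabs_right b) by lra. f_equal; lra.
        -- left. rewrite (Rabs_left b) by lra. f_equal; lra.
      * right. assert (0 <= b) by nra. rewrite Rabs_left by lra. rewrite Rabs_right by lra. auto.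
Qed.

Lemma ccf_opp r t : ccf (Copp r) t = ccf r t.
Proof.
  rewrite !ccf_eq. destruct r as [a b]; simpl.
  replace (- a * t) with (- (a * t)) by ring. replace (- b * t) with (- (b * t)) by ring.
  rewrite cos_neg, sin_neg. unfold cosh, sinh. rewrite Ropp_involutive. f_equal; field.
Qed.

Lemma ccf_csqrt r t : ccf (csqrt (Cmult r r)) t = ccf r t.
Proof. destruct (csqrt_sq r) as [E|E]; rewrite E; auto using ccf_opp. Qed.

Lemma Dt_eq x r s : Dt x (Cmult r r) (Cmult s s) = RI x (fun t => Cmult (ccf r t) (ccf s t)).
Proof.
  unfold Dt, RI. apply (RInt_ext (V:=C_R_CompleteNormedModule)). intros t _.
  change (Cmult (ccf (csqrt (Cmult r r)) t) (ccf (csqrt (Cmult s s)) t) = Cmult (ccf r t) (ccf s t)).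
  rewrite !ccf_csqrt. reflexivity.
Qed.

Lemma ccf_real m t : ccf (RtoC m) t = RtoC (cos (m * t)).
Proof.
  rewrite ccf_eq. unfold RtoC; simpl. rewrite Rmult_0_l. unfold cosh, sinh.
  rewrite Ropp_0, exp_0. f_equal; field.
Qed.

Definition wcol (p : nat) (lam alpha : nat -> C) (f : nat -> bool -> C) (k : nat) (t : R) : C :=
  Cminus (Cmult (Cmult (alpha k) (ccf (rho lam k) t)) (Cplus (Cmult (rhohat p lam k) (f k false)) (f k true)))
         (Cmult (Cmult (alpha_t p k) (ccf (rho_t p k) t)) (f k true)).

Lemma CC_wcol p lam alpha f k : CC (wcol p lam alpha f k).
Proof.
  unfold wcol. apply CC_minus; apply CC_mult; try apply CC_const; apply CC_mult; try apply CC_const; apply CC_ccf.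
Qed.

Lemma QTterm_eq p lam alpha x f n i k :
  QTterm p lam alpha x f n i k = RI x (fun t => Cmult (ccf (rhoi p lam n i) t) (wcol p lam alpha f k t)).
Proof.
  unfold QTterm, Qt. rewrite !Dt_eq.
  unfold alphai, rhoi; simpl.
  set (u := ccf (if i then rho_t p n else rho lam n)).
  rewrite <- !RI_cmul by (apply CC_mult; apply CC_ccf).
  set (X := Cplus (Cmult (rhohat p lam k) (f k false)) (f k true)).
  rewrite (Cmult_comm _ X), (Cmult_comm _ (f k true)).
  rewrite <- !RI_cmul by (apply CC_mult; try apply CC_const; apply CC_mult; apply CC_ccf).
  rewrite <- RI_minus by (apply CC_mult; try apply CC_const; apply CC_mult; try apply CC_const; apply CC_mult; apply CC_ccf).
  apply RI_ext. intros t. unfold wcol. fold X. field.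
Qed.


Lemma sq3 a b c : (a + b + c) ^ 2 <= 3 * a ^ 2 + 3 * b ^ 2 + 3 * c ^ 2.
Proof. pose proof (pow2_ge_0 (a - b)). pose proof (pow2_ge_0 (a - c)). pose proof (pow2_ge_0 (b - c)). nra. Qed.

Lemma N_t x F : 0 <= x <= PI -> CR F -> I x (fun t => (t * F t) ^ 2) <= PI ^ 2 * I x (fun t => F t ^ 2).
Proof.
  intros Hx HF. rewrite <- I_scal by crt. apply I_le; try lra; crt.
  intros t Ht. replace ((t * F t) ^ 2) with (t ^ 2 * F t ^ 2) by ring.
  apply Rmult_le_compat_r. apply pow2_ge_0. apply pow_incr; lra.
Qed.

Lemma N3 x F1 F2 F3 : 0 <= x -> CR F1 -> CR F2 -> CR F3 ->
  I x (fun t => (F1 t + F2 t + F3 t) ^ 2) <= 3 * I x (fun t => F1 t ^ 2) + 3 * I x (fun t => F2 t ^ 2) + 3 * I x (fun t => F3 t ^ 2).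
Proof.
  intros. rewrite <- !I_scal by crt. rewrite <- !I_plus by crt.
  apply I_le; auto; crt. intros; apply sq3.
Qed.

Lemma NC_decomp x (phi1 phi2 : nat -> R -> R) (A B : nat -> C) (Rj : nat -> R -> C) (eps : nat -> R) L :
  0 <= x <= PI -> Orth phi1 -> Orth phi2 -> (forall j, CC (Rj j)) ->
  (forall j t, 0 <= t <= x -> Cmod (Rj j t) <= eps j) ->
  NC x (fun t => cs (fun j => Cplus (Cplus (Cmult (A j) (RtoC (phi1 j t))) (Cmult (B j) (RtoC (t * phi2 j t)))) (Rj j t)) L)
   <= 3 * (PI / 2 * rs (fun j => Cmod (A j) ^ 2) L + PI ^ 3 / 2 * rs (fun j => Cmod (B j) ^ 2) L + PI * rs eps L ^ 2).
Proof.
  intros Hx HO1 HO2 HR Heps.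
  pose proof HO1 as [Hc1 _]. pose proof HO2 as [Hc2 _].
  set (G := fun t => cs (fun j => Rj j t) L).
  assert (HG : CC G) by (apply CC_cs; auto).
  assert (E1 : forall t, fst (cs (fun j => Cplus (Cplus (Cmult (A j) (RtoC (phi1 j t))) (Cmult (B j) (RtoC (t * phi2 j t)))) (Rj j t)) L)
     = Fsum phi1 (fun j => fst (A j)) L t + t * Fsum phi2 (fun j => fst (B j)) L t + fst (G t)).
  { intros t. unfold G, Fsum. rewrite !cs_fst. rewrite <- rs_scal, <- !rs_plus. apply rs_ext. intros.
    unfold Cplus, Cmult, RtoC, Re, Im; cbn [fst snd]. ring. }
  assert (E2 : forall t, snd (cs (fun j => Cplus (Cplus (Cmult (A j) (RtoC (phi1 j t))) (Cmult (B j) (RtoC (t * phi2 j t)))) (Rj j t)) L)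
     = Fsum phi1 (fun j => snd (A j)) L t + t * Fsum phi2 (fun j => snd (B j)) L t + snd (G t)).
  { intros t. unfold G, Fsum. rewrite !cs_snd. rewrite <- rs_scal, <- !rs_plus. apply rs_ext. intros.
    unfold Cplus, Cmult, RtoC, Re, Im; cbn [fst snd]. ring. }
  unfold NC. rewrite (I_ext _ _ _ (fun t => f_equal (fun z => z ^ 2) (E1 t))).
  rewrite (I_ext x (fun t => snd _ ^ 2) _ (fun t => f_equal (fun z => z ^ 2) (E2 t))).
  destruct HG as [G1 G2].
  assert (CF1 : forall b, CR (Fsum phi1 b L)) by (intros; apply CR_Fsum; auto).
  assert (CF2 : forall b, CR (Fsum phi2 b L)) by (intros; apply CR_Fsum; auto).
  assert (CT : forall b, CR (fun t => t * Fsum phi2 b L t)) by (intros; apply CR_mult; auto using CR_id).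
  pose proof (N3 x _ _ _ ltac:(lra) (CF1 (fun j => fst (A j))) (CT (fun j => fst (B j))) G1).
  pose proof (N3 x _ _ _ ltac:(lra) (CF1 (fun j => snd (A j))) (CT (fun j => snd (B j))) G2).
  pose proof (N_t x _ Hx (CF2 (fun j => fst (B j)))).
  pose proof (N_t x _ Hx (CF2 (fun j => snd (B j)))).
  pose proof (synth phi1 (fun j => fst (A j)) L x HO1 Hx).
  pose proof (synth phi1 (fun j => snd (A j)) L x HO1 Hx).
  pose proof (synth phi2 (fun j => fst (B j)) L x HO2 Hx).
  pose proof (synth phi2 (fun j => snd (B j)) L x HO2 Hx).
  assert (HGs : NC x G <= x * rs eps L ^ 2).
  { apply NC_sup; try lra. split; auto. intros t Ht. unfold G.
    eapply Rle_trans. apply Cmod_cs. apply rs_le. intros; auto. }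
  unfold NC in HGs.
  assert (EA : rs (fun j => Cmod (A j) ^ 2) L = rs (fun j => fst (A j) ^ 2) L + rs (fun j => snd (A j) ^ 2) L).
  { rewrite <- rs_plus. apply rs_ext. intros. rewrite Cmod2_alt. reflexivity. }
  assert (EB : rs (fun j => Cmod (B j) ^ 2) L = rs (fun j => fst (B j) ^ 2) L + rs (fun j => snd (B j) ^ 2) L).
  { rewrite <- rs_plus. apply rs_ext. intros. rewrite Cmod2_alt. reflexivity. }
  rewrite EA, EB.
  assert (0 <= rs eps L ^ 2) by apply pow2_ge_0.
  assert (x * rs eps L ^ 2 <= PI * rs eps L ^ 2) by (apply Rmult_le_compat_r; lra).
  assert (HP := PI_RGT_0).
  assert (PI ^ 2 * (PI / 2 * rs (fun j => fst (B j) ^ 2) L) = PI ^ 3 / 2 * rs (fun j => fst (B j) ^ 2) L) by (field).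
  assert (PI ^ 2 * (PI / 2 * rs (fun j => snd (B j) ^ 2) L) = PI ^ 3 / 2 * rs (fun j => snd (B j) ^ 2) L) by (field).
  assert (PI ^ 2 * I x (fun t => Fsum phi2 (fun j => fst (B j)) L t ^ 2) <= PI ^ 2 * (PI / 2 * rs (fun j => fst (B j) ^ 2) L)) by (apply Rmult_le_compat_l; [nra|auto]).
  assert (PI ^ 2 * I x (fun t => Fsum phi2 (fun j => snd (B j)) L t ^ 2) <= PI ^ 2 * (PI / 2 * rs (fun j => snd (B j) ^ 2) L)) by (apply Rmult_le_compat_l; [nra|auto]).
  lra.
Qed.

Lemma Cmod_sq_plus a b : Cmod (Cplus a b) ^ 2 <= 2 * Cmod a ^ 2 + 2 * Cmod b ^ 2.
Proof.
  pose proof (Cmod_triangle a b). pose proof (Cmod_ge_0 (Cplus a b)).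
  pose proof (Cmod_ge_0 a). pose proof (Cmod_ge_0 b).
  pose proof (pow2_ge_0 (Cmod a - Cmod b)).
  assert (Cmod (Cplus a b) ^ 2 <= (Cmod a + Cmod b) ^ 2) by (apply pow_incr; lra).
  nra.
Qed.

Lemma RI_cos_sq x H j : CC H ->
  Cmod (RI x (fun t => Cmult (RtoC (cos (INR (S j) * t))) (H t))) ^ 2 =
  I x (fun t => fst (H t) * cosf j t) ^ 2 + I x (fun t => snd (H t) * cosf j t) ^ 2.
Proof.
  intros HH. rewrite RI_comp. 2: apply CC_mult; auto; apply CC_RtoC, CR_cosl.
  rewrite Cmod2_alt. unfold Re, Im; cbn [fst snd].
  rewrite (I_ext x _ (fun t => fst (H t) * cosf j t)).
  rewrite (I_ext x (fun t => snd _) (fun t => snd (H t) * cosf j t)). reflexivity.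
  all: intros t; unfold Cmult, RtoC, cosf; cbn [fst snd]; ring.
Qed.

Lemma rows_high x H (kap : nat -> C) L Om :
  0 <= x <= PI -> CC H -> (forall j, Cmod (kap j) <= Om) -> rs (fun j => Cmod (kap j) ^ 2) L <= Om ^ 2 ->
  rs (fun j => Cmod (RI x (fun t => Cmult (ccf (Cplus (RtoC (INR (S j))) (kap j)) t) (H t))) ^ 2) L
   <= (PI + 4 * PI * C1c Om ^ 2 * Om ^ 2) * NC x H.
Proof.
  intros Hx HH Hk HL.
  assert (HP := PI_RGT_0).
  assert (HNH := NC_ge0 x H ltac:(lra) HH).
  assert (Hterm : forall j, Cmod (RI x (fun t => Cmult (ccf (Cplus (RtoC (INR (S j))) (kap j)) t) (H t))) ^ 2
     <= 2 * (I x (fun t => fst (H t) * cosf j t) ^ 2 + I x (fun t => snd (H t) * cosf j t) ^ 2)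
        + 2 * (2 * (PI * (C1c Om * Cmod (kap j)) ^ 2) * NC x H)).
  { intros j.
    set (c := fun t => RtoC (cos (INR (S j) * t))).
    set (v := fun t => Cminus (ccf (Cplus (RtoC (INR (S j))) (kap j)) t) (c t)).
    assert (Hc : CC c) by (apply CC_RtoC, CR_cosl).
    assert (Hv : CC v) by (apply CC_minus; auto; apply CC_ccf).
    rewrite (RI_ext _ _ (fun t => Cplus (Cmult (c t) (H t)) (Cmult (v t) (H t)))).
    2: { intros t. unfold v. field. }
    rewrite RI_plus by (apply CC_mult; auto).
    eapply Rle_trans. apply Cmod_sq_plus.
    apply Rplus_le_compat.
    - unfold c. rewrite RI_cos_sq; auto. lra.
    - apply Rmult_le_compat_l; [lra|].
      eapply Rle_trans. apply RI_CS; auto; lra.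
      apply Rmult_le_compat_r; auto. apply Rmult_le_compat_l; [lra|].
      eapply Rle_trans. apply NC_sup; auto; try lra.
      intros t Ht. unfold v, c. apply ccf_t1; auto; lra.
      apply Rmult_le_compat_r. apply pow2_ge_0. lra. }
  eapply Rle_trans. apply rs_le. intros j _. apply Hterm.
  set (C4 := 4 * PI * C1c Om ^ 2 * NC x H).
  rewrite (rs_ext _ (fun j => 2 * (I x (fun t => fst (H t) * cosf j t) ^ 2) + 2 * (I x (fun t => snd (H t) * cosf j t) ^ 2) + C4 * Cmod (kap j) ^ 2)) by (intros; unfold C4; ring).
  rewrite !rs_plus, !rs_scal.
  pose proof (bessel cosf (fun t => fst (H t)) L x Orth_cos Hx (proj1 HH)).
  pose proof (bessel cosf (fun t => snd (H t)) L x Orth_cos Hx (proj2 HH)).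
  assert (0 <= C4).
  { unfold C4. pose proof (pow2_ge_0 (C1c Om)). apply Rmult_le_pos; [|lra]. nra. }
  assert (C4 * rs (fun j => Cmod (kap j) ^ 2) L <= C4 * Om ^ 2) by (apply Rmult_le_compat_l; auto).
  replace ((PI + 4 * PI * C1c Om ^ 2 * Om ^ 2) * NC x H) with (PI * NC x H + C4 * Om ^ 2) by (unfold C4; ring).
  unfold NC in *. lra.
Qed.

Lemma rows_low x H z Om : 0 <= x <= PI -> CC H -> Rabs (snd z) <= Om ->
  Cmod (RI x (fun t => Cmult (ccf z t) (H t))) ^ 2 <= 2 * (PI * (2 * exp (PI * Om)) ^ 2) * NC x H.
Proof.
  intros Hx HH Hz. eapply Rle_trans. apply RI_CS; auto using CC_ccf; lra.
  apply Rmult_le_compat_r. apply NC_ge0; auto; lra.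
  apply Rmult_le_compat_l; [lra|].
  eapply Rle_trans. apply (NC_sup x _ (2 * exp (PI * Om))); auto using CC_ccf; try lra.
  intros t Ht. apply ccf_bound; auto; lra.
  apply Rmult_le_compat_r. apply pow2_ge_0. lra.
Qed.


Definition Hyp p Om lam alpha (f : nat -> bool -> C) Fm :=
  0 < Om /\ 0 <= Fm /\
  (forall k i, (1 <= k)%nat -> Cmod (f k i) <= Fm) /\
  (forall k, (1 <= k)%nat -> xi p lam alpha k <= Om) /\
  (forall M1 L, (1 <= M1)%nat -> rs (fun j => xi p lam alpha (M1 + j) ^ 2) L <= Om ^ 2).

Definition mk p k := INR k - INR p - 1.

Lemma rho_t_high p k : (p + 2 <= k)%nat -> rho_t p k = RtoC (mk p k).
Proof.
  intros H. unfold rho_t, mk. destruct (Nat.leb_spec k (p + 1)); [lia|]. reflexivity.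
Qed.
Lemma alpha_t_high p k : (p + 2 <= k)%nat -> alpha_t p k = RtoC (2 / PI).
Proof.
  intros H. unfold alpha_t. destruct (Nat.eqb_spec k 1); [lia|]. destruct (Nat.leb_spec k (p + 1)); [lia|]. reflexivity.
Qed.
Lemma rho_t_low p k : (k <= p + 1)%nat -> rho_t p k = RtoC 0.
Proof. intros H. unfold rho_t. destruct (Nat.leb_spec k (p + 1)); [reflexivity|lia]. Qed.

Lemma xi_rho p lam alpha k : Cmod (rhohat p lam k) <= xi p lam alpha k.
Proof. unfold xi, rhohat. pose proof (Cmod_ge_0 (Cminus (alpha k) (alpha_t p k))). lra. Qed.
Lemma xi_alpha p lam alpha k : Cmod (Cminus (alpha k) (alpha_t p k)) <= xi p lam alpha k.
Proof. unfold xi. pose proof (Cmod_ge_0 (Cminus (rho lam k) (rho_t p k))). lra. Qed.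

Lemma Cmod_sub_le a b : Cmod a <= Cmod b + Cmod (Cminus a b).
Proof.
  replace a with (Cplus b (Cminus a b)) at 1 by field. apply Cmod_triangle.
Qed.

Definition ak p lam alpha f k : C :=
  Cplus (Cmult (Cmult (alpha k) (rhohat p lam k)) (f k false)) (Cmult (Cminus (alpha k) (alpha_t p k)) (f k true)).
Definition dk p f k : C := Cmult (alpha_t p k) (f k true).
Definition Rk p lam alpha f k t : C :=
  Cplus (Cmult (ak p lam alpha f k) (Cminus (ccf (rho lam k) t) (RtoC (cos (mk p k * t)))))
        (Cmult (dk p f k) (Cplus (Cminus (ccf (rho lam k) t) (RtoC (cos (mk p k * t))))
                                 (Cmult (rhohat p lam k) (RtoC (t * sin (mk p k * t)))))).

Lemma wcol_decomp p lam alpha f k t : (p + 2 <= k)%nat ->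
  wcol p lam alpha f k t =
  Cplus (Cplus (Cmult (ak p lam alpha f k) (RtoC (cos (mk p k * t))))
               (Cmult (Copp (Cmult (dk p f k) (rhohat p lam k))) (RtoC (t * sin (mk p k * t)))))
        (Rk p lam alpha f k t).
Proof.
  intros H. unfold wcol, Rk, ak, dk. rewrite (rho_t_high p k H), ccf_real.
  unfold rhohat. rewrite (rho_t_high p k H). field.
Qed.

Lemma rho_decomp p lam k : (p + 2 <= k)%nat -> rho lam k = Cplus (RtoC (mk p k)) (rhohat p lam k).
Proof. intros H. unfold rhohat. rewrite (rho_t_high p k H). field. Qed.

Definition Ca Om := 2 / PI + Om + 1.
Definition Ce Om := Ca Om * C1c Om + 2 / PI * C2c Om.
Definition CH Om := 3 * (PI / 2 * Ca Om ^ 2 + PI ^ 3 / 2 * (2 / PI) ^ 2 + PI * Ce Om ^ 2 * Om ^ 2).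

Lemma CC_Rk p lam alpha f k : CC (Rk p lam alpha f k).
Proof.
  unfold Rk. apply CC_plus; apply CC_mult; try apply CC_const.
  apply CC_minus. apply CC_ccf. apply CC_RtoC, CR_cosl.
  apply CC_plus. apply CC_minus. apply CC_ccf. apply CC_RtoC, CR_cosl.
  apply CC_mult. apply CC_const. apply CC_RtoC. apply CR_mult. apply CR_id. apply CR_sinl.
Qed.

Lemma twoPI_pos : 0 < 2 / PI.
Proof. apply Rdiv_lt_0_compat; [lra|apply PI_RGT_0]. Qed.

Lemma C2c_pos Om : 0 <= Om -> 0 <= C2c Om.
Proof.
  intros. unfold C2c. pose proof PI_RGT_0. assert (0 <= PI * Om) by nra.
  pose proof (KK_pos _ H1). assert (0 <= PI ^ 2) by apply pow2_ge_0.
  apply Rmult_le_pos; [|auto]. lra.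
Qed.
Lemma C1c_pos Om : 0 <= Om -> 0 <= C1c Om.
Proof.
  intros. unfold C1c. pose proof (C2c_pos Om H). pose proof PI_RGT_0.
  assert (0 <= C2c Om * Om) by (apply Rmult_le_pos; auto). lra.
Qed.

Lemma Cmod_mult_le a b A B : Cmod a <= A -> Cmod b <= B -> Cmod (Cmult a b) <= A * B.
Proof. intros. rewrite Cmod_mult. apply Rmult_le_compat; auto using Cmod_ge_0. Qed.

Lemma Cmod_twoPI : Cmod (RtoC (2 / PI)) = 2 / PI.
Proof. rewrite Cmod_R. apply Rabs_right. pose proof twoPI_pos. lra. Qed.

Lemma bounds_k (p : nat) (Om : R) (lam alpha : nat -> C) (f : nat -> bool -> C) (Fm : R)
  (HH : Hyp p Om lam alpha f Fm) k : (p + 2 <= k)%nat ->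
  Cmod (ak p lam alpha f k) <= Ca Om * Fm * xi p lam alpha k /\
  Cmod (dk p f k) <= 2 / PI * Fm /\
  Cmod (rhohat p lam k) <= xi p lam alpha k /\
  xi p lam alpha k <= Om /\ 0 <= xi p lam alpha k.
Proof.
  intros Hk. destruct HH as [HO [HF [Hf [Hxi Hs]]]].
  assert (H1 : (1 <= k)%nat) by lia.
  assert (Hx0 : 0 <= xi p lam alpha k) by (unfold xi; pose proof (Cmod_ge_0 (Cminus (rho lam k) (rho_t p k))); pose proof (Cmod_ge_0 (Cminus (alpha k) (alpha_t p k))); lra).
  pose proof (xi_rho p lam alpha k). pose proof (xi_alpha p lam alpha k).
  pose proof (Hxi k H1). pose proof (Hf k false H1). pose proof (Hf k true H1).
  pose proof twoPI_pos.
  assert (Ha : Cmod (alpha k) <= 2 / PI + xi p lam alpha k).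
  { eapply Rle_trans. apply (Cmod_sub_le (alpha k) (alpha_t p k)). rewrite alpha_t_high, Cmod_twoPI by auto.
    rewrite alpha_t_high in H0 by auto. lra. }
  split; [|split; [|split; [|split]]]; auto.
  - unfold ak. eapply Rle_trans. apply Cmod_triangle.
    pose proof (Cmod_mult_le _ _ _ _ (Cmod_mult_le _ _ _ _ Ha H) H3).
    pose proof (Cmod_mult_le _ _ _ _ H0 H4).
    set (X := xi p lam alpha k) in *.
    assert (0 <= (Om - X) * (X * Fm)) by (apply Rmult_le_pos; [lra|apply Rmult_le_pos; lra]).
    unfold Ca. 
    replace ((2 / PI + Om + 1) * Fm * X) with ((2 / PI + X) * X * Fm + X * Fm + (Om - X) * (X * Fm)) by ring.
    lra.
  - unfold dk. rewrite alpha_t_high by auto. apply Cmod_mult_le; auto. rewrite Cmod_twoPI; lra.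
Qed.

Lemma mk_S p M1 j : (p + 2 <= M1)%nat -> mk p (M1 + j) = INR (S (M1 - p - 2 + j)).
Proof.
  intros H. unfold mk. replace (M1 + j)%nat with (p + 1 + S (M1 - p - 2 + j))%nat by lia.
  rewrite !plus_INR. simpl (INR 1). ring.
Qed.

Lemma col_high p Om lam alpha f Fm x M1 L : Hyp p Om lam alpha f Fm -> 0 <= x <= PI -> (p + 2 <= M1)%nat ->
  NC x (fun t => cs (fun j => wcol p lam alpha f (M1 + j) t) L)
   <= CH Om * Fm ^ 2 * rs (fun j => xi p lam alpha (M1 + j) ^ 2) L.
Proof.
  intros HH Hx HM.
  pose proof HH as [HO [HF [Hf [Hxi Hs]]]].
  set (s := (M1 - p - 2)%nat).
  set (A := fun j => ak p lam alpha f (M1 + j)).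
  set (B := fun j => Copp (Cmult (dk p f (M1 + j)) (rhohat p lam (M1 + j)))).
  set (eps := fun j => Cmod (A j) * C1c Om * Cmod (rhohat p lam (M1 + j)) + Cmod (dk p f (M1 + j)) * C2c Om * Cmod (rhohat p lam (M1 + j)) ^ 2).
  rewrite (NC_ext x _ (fun t => cs (fun j => Cplus (Cplus (Cmult (A j) (RtoC (cosf (s + j) t))) (Cmult (B j) (RtoC (t * sinf (s + j) t)))) (Rk p lam alpha f (M1 + j) t)) L)).
  2: { intros t. apply cs_ext. intros j _. rewrite wcol_decomp by lia. unfold A, B, cosf, sinf, s.
       rewrite mk_S by lia. reflexivity. }
  eapply Rle_trans.
  apply (NC_decomp x (fun j => cosf (s + j)) (fun j => sinf (s + j)) A B (fun j => Rk p lam alpha f (M1 + j)) eps L Hx).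
  apply Orth_shift, Orth_cos. apply Orth_shift, Orth_sin. intros; apply CC_Rk.
  { intros j t Ht. unfold Rk, eps.
    destruct (bounds_k p Om lam alpha f Fm HH (M1 + j) ltac:(lia)) as [B1 [B2 [B3 [B4 B5]]]].
    assert (Hk : Cmod (rhohat p lam (M1 + j)) <= Om) by lra.
    rewrite (rho_decomp p lam (M1 + j)) by lia.
    eapply Rle_trans. apply Cmod_triangle.
    apply Rplus_le_compat.
    - rewrite Cmod_mult. rewrite Rmult_assoc. apply Rmult_le_compat_l. apply Cmod_ge_0.
      apply ccf_t1; auto. lra.
    - rewrite Cmod_mult. rewrite Rmult_assoc. apply Rmult_le_compat_l. apply Cmod_ge_0.
      apply ccf_t2; auto. lra. }
  set (S := rs (fun j => xi p lam alpha (M1 + j) ^ 2) L).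
  assert (HS0 : 0 <= S) by (apply rs_ge0; intros; apply pow2_ge_0).
  assert (HSO : S <= Om ^ 2) by (apply Hs; lia).
  pose proof twoPI_pos as H2P. pose proof PI_RGT_0 as HP.
  pose proof (C1c_pos Om ltac:(lra)) as HC1. pose proof (C2c_pos Om ltac:(lra)) as HC2.
  assert (HCa : 0 <= Ca Om) by (unfold Ca; lra).
  assert (SA : rs (fun j => Cmod (A j) ^ 2) L <= Ca Om ^ 2 * Fm ^ 2 * S).
  { unfold S. rewrite <- rs_scal. apply rs_le. intros j _.
    destruct (bounds_k p Om lam alpha f Fm HH (M1 + j) ltac:(lia)) as [B1 [B2 [B3 [B4 B5]]]].
    unfold A. replace (Ca Om ^ 2 * Fm ^ 2 * xi p lam alpha (M1 + j) ^ 2) with ((Ca Om * Fm * xi p lam alpha (M1 + j)) ^ 2) by ring.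
    apply pow_incr. split; auto using Cmod_ge_0. }
  assert (SB : rs (fun j => Cmod (B j) ^ 2) L <= (2 / PI) ^ 2 * Fm ^ 2 * S).
  { unfold S. rewrite <- rs_scal. apply rs_le. intros j _.
    destruct (bounds_k p Om lam alpha f Fm HH (M1 + j) ltac:(lia)) as [B1 [B2 [B3 [B4 B5]]]].
    unfold B. rewrite Cmod_opp.
    replace ((2 / PI) ^ 2 * Fm ^ 2 * xi p lam alpha (M1 + j) ^ 2) with ((2 / PI * Fm * xi p lam alpha (M1 + j)) ^ 2) by ring.
    apply pow_incr. split; auto using Cmod_ge_0. apply Cmod_mult_le; auto. }
  assert (SE : rs eps L <= Ce Om * Fm * S).
  { unfold S. rewrite <- rs_scal. apply rs_le. intros j _.
    destruct (bounds_k p Om lam alpha f Fm HH (M1 + j) ltac:(lia)) as [B1 [B2 [B3 [B4 B5]]]].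
    unfold eps, Ce. change (ak p lam alpha f (M1 + j)) with (A j) in B1.
    set (X := xi p lam alpha (M1 + j)) in *. set (k := Cmod (rhohat p lam (M1 + j))) in *.
    assert (Hk0 : 0 <= k) by apply Cmod_ge_0.
    assert (E1 : Cmod (A j) * C1c Om * k <= Ca Om * Fm * X * C1c Om * X).
    { apply Rmult_le_compat; auto. apply Rmult_le_pos; auto using Cmod_ge_0. apply Rmult_le_compat_r; auto. }
    assert (E2 : Cmod (dk p f (M1 + j)) * C2c Om * k ^ 2 <= 2 / PI * Fm * C2c Om * X ^ 2).
    { apply Rmult_le_compat; auto. apply Rmult_le_pos; auto using Cmod_ge_0. apply pow2_ge_0.
      apply Rmult_le_compat_r; auto. apply pow_incr; auto. }
    replace ((Ca Om * C1c Om + 2 / PI * C2c Om) * Fm * X ^ 2) with (Ca Om * Fm * X * C1c Om * X + 2 / PI * Fm * C2c Om * X ^ 2) by ring.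
    lra. }
  assert (HE0 : 0 <= rs eps L).
  { apply rs_ge0. intros j _. unfold eps.
    pose proof (Cmod_ge_0 (A j)). pose proof (Cmod_ge_0 (rhohat p lam (M1 + j))). pose proof (Cmod_ge_0 (dk p f (M1 + j))).
    assert (0 <= Cmod (A j) * C1c Om * Cmod (rhohat p lam (M1 + j))) by (repeat apply Rmult_le_pos; auto).
    assert (0 <= Cmod (dk p f (M1 + j)) * C2c Om * Cmod (rhohat p lam (M1 + j)) ^ 2) by (apply Rmult_le_pos; [apply Rmult_le_pos; auto|apply pow2_ge_0]).
    lra. }
  assert (SE2 : rs eps L ^ 2 <= Ce Om ^ 2 * Fm ^ 2 * Om ^ 2 * S).
  { eapply Rle_trans. apply pow_incr. split. auto. apply SE.
    replace ((Ce Om * Fm * S) ^ 2) with (Ce Om ^ 2 * Fm ^ 2 * (S * S)) by ring.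
    replace (Ce Om ^ 2 * Fm ^ 2 * Om ^ 2 * S) with (Ce Om ^ 2 * Fm ^ 2 * (Om ^ 2 * S)) by ring.
    apply Rmult_le_compat_l. apply Rmult_le_pos; apply pow2_ge_0.
    apply Rmult_le_compat_r; auto. }
  unfold CH.
  assert (PI / 2 * rs (fun j => Cmod (A j) ^ 2) L <= PI / 2 * (Ca Om ^ 2 * Fm ^ 2 * S)) by (apply Rmult_le_compat_l; lra).
  assert (PI ^ 3 / 2 * rs (fun j => Cmod (B j) ^ 2) L <= PI ^ 3 / 2 * ((2 / PI) ^ 2 * Fm ^ 2 * S)).
  { apply Rmult_le_compat_l; auto. assert (0 < PI ^ 3) by (apply pow_lt; lra). lra. }
  assert (PI * rs eps L ^ 2 <= PI * (Ce Om ^ 2 * Fm ^ 2 * Om ^ 2 * S)) by (apply Rmult_le_compat_l; lra).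
  replace (3 * (PI / 2 * Ca Om ^ 2 + PI ^ 3 / 2 * (2 / PI) ^ 2 + PI * Ce Om ^ 2 * Om ^ 2) * Fm ^ 2 * S)
    with (3 * (PI / 2 * (Ca Om ^ 2 * Fm ^ 2 * S) + PI ^ 3 / 2 * ((2 / PI) ^ 2 * Fm ^ 2 * S) + PI * (Ce Om ^ 2 * Fm ^ 2 * Om ^ 2 * S))) by ring.
  lra.
Qed.


Definition Hw p lam alpha f M1 L t := cs (fun j => wcol p lam alpha f (M1 + j) t) L.

Lemma CC_Hw p lam alpha f M1 L : CC (Hw p lam alpha f M1 L).
Proof. unfold Hw. apply (CC_cs (fun j => wcol p lam alpha f (M1 + j))). intros; apply CC_wcol. Qed.

Lemma cs_cmul c g n : Cmult c (cs g n) = cs (fun k => Cmult c (g k)) n.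
Proof. induction n; simpl. apply injective_projections; simpl; ring. rewrite <- IHn. field. Qed.

Lemma sum_QT p lam alpha x f n i M1 L :
  cs (fun j => QTterm p lam alpha x f n i (M1 + j)) L =
  RI x (fun t => Cmult (ccf (rhoi p lam n i) t) (Hw p lam alpha f M1 L t)).
Proof.
  rewrite (cs_ext _ (fun j => RI x (fun t => Cmult (ccf (rhoi p lam n i) t) (wcol p lam alpha f (M1 + j) t)))) by (intros; apply QTterm_eq).
  rewrite <- (RI_cs x (fun j t => Cmult (ccf (rhoi p lam n i) t) (wcol p lam alpha f (M1 + j) t))).
  apply RI_ext. intros t. unfold Hw. rewrite cs_cmul. reflexivity.
  intros; apply CC_mult; [apply CC_ccf|apply CC_wcol].
Qed.

Lemma alpha_t_le p k : Cmod (alpha_t p k) <= 2 / PI.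
Proof.
  pose proof PI_RGT_0. unfold alpha_t.
  destruct (Nat.eqb k 1). rewrite Cmod_R, Rabs_right. apply Rmult_le_compat_r. apply Rlt_le, Rinv_0_lt_compat; lra. lra.
  apply Rle_ge, Rlt_le, Rdiv_lt_0_compat; lra.
  destruct (Nat.leb k (p + 1)). rewrite Cmod_R, Rabs_R0. apply Rlt_le, twoPI_pos.
  rewrite Cmod_twoPI. lra.
Qed.

Lemma snd_rho_t p k : snd (rho_t p k) = 0.
Proof. unfold rho_t. destruct (Nat.leb k (p + 1)); reflexivity. Qed.

Lemma snd_rho_le p lam alpha k : Rabs (snd (rho lam k)) <= xi p lam alpha k.
Proof.
  eapply Rle_trans. 2: apply (xi_rho p lam alpha k). unfold rhohat.
  replace (snd (rho lam k)) with (snd (Cminus (rho lam k) (rho_t p k))).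
  apply snd_le_Cmod. unfold Cminus, Cplus, Copp; cbn [snd]. rewrite snd_rho_t. ring.
Qed.

Definition E2 Om := 2 * exp (PI * Om).
Definition Cw Om := (2 / PI + Om) * E2 Om * (Om + 1) + 2 / PI * E2 Om.

Lemma wcol_bound p Om lam alpha f Fm k t : Hyp p Om lam alpha f Fm -> (1 <= k)%nat -> 0 <= t <= PI ->
  Cmod (wcol p lam alpha f k t) <= Cw Om * Fm.
Proof.
  intros HH Hk Ht. destruct HH as [HO [HF [Hf [Hxi Hs]]]].
  pose proof (Hxi k Hk). pose proof (xi_rho p lam alpha k). pose proof (xi_alpha p lam alpha k).
  pose proof (Hf k false Hk). pose proof (Hf k true Hk). pose proof (alpha_t_le p k).
  pose proof twoPI_pos.
  assert (Ha : Cmod (alpha k) <= 2 / PI + Om).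
  { eapply Rle_trans. apply (Cmod_sub_le (alpha k) (alpha_t p k)). lra. }
  assert (Hc1 : Cmod (ccf (rho lam k) t) <= E2 Om).
  { apply ccf_bound; auto. pose proof (snd_rho_le p lam alpha k). lra. }
  assert (Hc2 : Cmod (ccf (rho_t p k) t) <= E2 Om).
  { apply ccf_bound; auto. rewrite snd_rho_t, Rabs_R0. lra. }
  assert (HX : Cmod (Cplus (Cmult (rhohat p lam k) (f k false)) (f k true)) <= (Om + 1) * Fm).
  { eapply Rle_trans. apply Cmod_triangle.
    pose proof (Cmod_mult_le (rhohat p lam k) (f k false) Om Fm ltac:(lra) H2). lra. }
  unfold wcol, Cminus. eapply Rle_trans. apply Cmod_triangle. rewrite Cmod_opp.
  pose proof (Cmod_mult_le _ _ _ _ (Cmod_mult_le _ _ _ _ Ha Hc1) HX).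
  pose proof (Cmod_mult_le _ _ _ _ (Cmod_mult_le _ _ _ _ H4 Hc2) H3).
  replace (Cw Om * Fm) with ((2 / PI + Om) * E2 Om * ((Om + 1) * Fm) + 2 / PI * E2 Om * Fm) by (unfold Cw; ring).
  lra.
Qed.

Lemma rs_const c n : rs (fun _ => c) n = INR n * c.
Proof. induction n; simpl. ring. rewrite IHn. destruct n; simpl; ring. Qed.

Lemma col_low p Om lam alpha f Fm x : Hyp p Om lam alpha f Fm -> 0 <= x <= PI ->
  NC x (Hw p lam alpha f 1 (S p)) <= PI * (INR (S p) * (Cw Om * Fm)) ^ 2.
Proof.
  intros HH Hx. eapply Rle_trans. apply (NC_sup x _ (INR (S p) * (Cw Om * Fm))); try lra. apply CC_Hw.
  intros t Ht. unfold Hw. eapply Rle_trans. apply Cmod_cs.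
  rewrite <- rs_const. apply rs_le. intros. apply (wcol_bound p Om lam alpha f Fm); auto; try lia; try lra.
  apply Rmult_le_compat_r. apply pow2_ge_0. lra.
Qed.

Definition CRow p Om := INR (S p) * (2 * (PI * E2 Om ^ 2)) + (PI + 4 * PI * C1c Om ^ 2 * Om ^ 2).

Lemma xi_ge0 p lam alpha k : 0 <= xi p lam alpha k.
Proof. unfold xi. pose proof (Cmod_ge_0 (Cminus (rho lam k) (rho_t p k))). pose proof (Cmod_ge_0 (Cminus (alpha k) (alpha_t p k))). lra. Qed.

Lemma rows_all p Om lam alpha f Fm x i H N : Hyp p Om lam alpha f Fm -> 0 <= x <= PI -> CC H ->
  rs (fun n => Cmod (RI x (fun t => Cmult (ccf (rhoi p lam (S n) i) t) (H t))) ^ 2) N <= CRow p Om * NC x H.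
Proof.
  intros HH Hx HC. pose proof HH as [HO [HF [Hf [Hxi Hs]]]].
  set (g := fun n => Cmod (RI x (fun t => Cmult (ccf (rhoi p lam (S n) i) t) (H t))) ^ 2).
  assert (Hg : forall n, 0 <= g n) by (intros; apply pow2_ge_0).
  assert (HNH := NC_ge0 x H ltac:(lra) HC).
  eapply Rle_trans. apply (rs_mono g N (S p + N)); auto; lia.
  rewrite rs_split. unfold CRow. rewrite Rmult_plus_distr_r. apply Rplus_le_compat.
  - rewrite Rmult_assoc, <- rs_const. apply rs_le. intros n Hn. unfold g.
    apply rows_low; auto. destruct i; unfold rhoi.
    + rewrite snd_rho_t, Rabs_R0. lra.
    + pose proof (snd_rho_le p lam alpha (S n)). pose proof (Hxi (S n) ltac:(lia)). lra.
  - set (kap := fun j => Cminus (rhoi p lam (S (S p + j)) i) (rho_t p (S (S p + j)))).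
    assert (Hk : forall j, Cmod (kap j) <= xi p lam alpha (p + 2 + j)).
    { intros j. unfold kap. replace (S (S p + j)) with (p + 2 + j)%nat by lia. destruct i; unfold rhoi.
      - replace (Cminus (rho_t p (p + 2 + j)) (rho_t p (p + 2 + j))) with (RtoC 0) by field.
        rewrite Cmod_0. apply xi_ge0.
      - apply xi_rho. }
    assert (Hk2 : forall j, Cmod (kap j) <= Om).
    { intros j. pose proof (Hk j). pose proof (Hxi (p + 2 + j)%nat ltac:(lia)). lra. }
    assert (HkL : rs (fun j => Cmod (kap j) ^ 2) N <= Om ^ 2).
    { eapply Rle_trans. 2: apply (Hs (p + 2)%nat N); lia. apply rs_le. intros j _. apply pow_incr.
      split. apply Cmod_ge_0. apply Hk. }
    pose proof (rows_high x H kap N Om Hx HC Hk2 HkL).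
    eapply Rle_trans. 2: apply H0.
    right. apply rs_ext. intros j _. unfold g.
    replace (rhoi p lam (S (S p + j)) i) with (Cplus (RtoC (INR (S j))) (kap j)). reflexivity.
    unfold kap. rewrite (rho_t_high p (S (S p + j))) by lia.
    replace (mk p (S (S p + j))) with (INR (S j)). field.
    replace (S (S p + j)) with (p + 2 + j)%nat by lia. rewrite mk_S by lia.
    f_equal. f_equal. lia.
Qed.


Lemma cs_split f a b : cs f (a + b) = Cplus (cs f a) (cs (fun k => f (a + k)%nat) b).
Proof.
  induction b; simpl. rewrite Nat.add_0_r. apply injective_projections; simpl; ring.
  rewrite Nat.add_succ_r; simpl; rewrite IHb. field.
Qed.

Lemma col_any p Om lam alpha f Fm x L : Hyp p Om lam alpha f Fm -> 0 <= x <= PI ->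
  NC x (Hw p lam alpha f 1 L) <= PI * (INR L * (Cw Om * Fm)) ^ 2.
Proof.
  intros HH Hx. eapply Rle_trans. apply (NC_sup x _ (INR L * (Cw Om * Fm))); try lra. apply CC_Hw.
  intros t Ht. unfold Hw. eapply Rle_trans. apply Cmod_cs.
  rewrite <- rs_const. apply rs_le. intros. apply (wcol_bound p Om lam alpha f Fm); auto; try lia; try lra.
  apply Rmult_le_compat_r. apply pow2_ge_0. lra.
Qed.

Definition Kb p Om := CRow p Om * (2 * PI * (INR (S p) * Cw Om) ^ 2 + 2 * CH Om * Om ^ 2).

Lemma CRow_pos p Om : 0 <= Om -> 0 <= CRow p Om.
Proof.
  intros. unfold CRow. pose proof PI_RGT_0. pose proof (pos_INR (S p)).
  assert (0 <= E2 Om ^ 2) by apply pow2_ge_0. assert (0 <= C1c Om ^ 2) by apply pow2_ge_0.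
  assert (0 <= Om ^ 2) by apply pow2_ge_0.
  assert (0 <= INR (S p) * (2 * (PI * E2 Om ^ 2))) by (apply Rmult_le_pos; [lra| apply Rmult_le_pos; [lra| apply Rmult_le_pos; lra]]).
  assert (0 <= 4 * PI * C1c Om ^ 2 * Om ^ 2) by (apply Rmult_le_pos; [apply Rmult_le_pos; [apply Rmult_le_pos|]|]; lra).
  lra.
Qed.

Lemma CH_pos Om : 0 <= CH Om.
Proof.
  unfold CH. pose proof PI_RGT_0.
  assert (0 <= PI / 2 * Ca Om ^ 2) by (apply Rmult_le_pos; [lra|apply pow2_ge_0]).
  assert (0 <= PI ^ 3 / 2 * (2 / PI) ^ 2) by (apply Rmult_le_pos; [assert (0 < PI ^ 3) by (apply pow_lt; lra); lra|apply pow2_ge_0]).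
  assert (0 <= PI * Ce Om ^ 2 * Om ^ 2) by (apply Rmult_le_pos; [apply Rmult_le_pos; [lra|apply pow2_ge_0]|apply pow2_ge_0]).
  lra.
Qed.

Lemma partial_bound p Om lam alpha f Fm x i M N : Hyp p Om lam alpha f Fm -> 0 <= x <= PI ->
  rs (fun n => Cmod (cs (fun j => QTterm p lam alpha x f (S n) i (1 + j)) M) ^ 2) N <= Kb p Om * Fm ^ 2.
Proof.
  intros HH Hx. pose proof HH as [HO [HF [Hf [Hxi Hs]]]].
  rewrite (rs_ext _ (fun n => Cmod (RI x (fun t => Cmult (ccf (rhoi p lam (S n) i) t) (Hw p lam alpha f 1 M t))) ^ 2))
    by (intros; rewrite sum_QT; reflexivity).
  eapply Rle_trans. apply (rows_all p Om lam alpha f Fm); auto. apply CC_Hw.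
  unfold Kb. rewrite Rmult_assoc. apply Rmult_le_compat_l. apply CRow_pos; lra.
  pose proof PI_RGT_0. pose proof (CH_pos Om).
  assert (HCw : 0 <= Cw Om).
  { unfold Cw, E2. pose proof twoPI_pos. pose proof (exp_pos (PI * Om)).
    assert (0 <= (2 / PI + Om) * (2 * exp (PI * Om)) * (Om + 1)) by (repeat apply Rmult_le_pos; lra).
    assert (0 <= 2 / PI * (2 * exp (PI * Om))) by (repeat apply Rmult_le_pos; lra). lra. }
  destruct (le_lt_dec M (S p)) as [HM|HM].
  - eapply Rle_trans. apply col_any; eauto.
    assert (INR M <= INR (S p)) by (apply le_INR; auto).
    assert ((INR M * (Cw Om * Fm)) ^ 2 <= (INR (S p) * (Cw Om * Fm)) ^ 2).
    { apply pow_incr. split. apply Rmult_le_pos; [apply pos_INR|apply Rmult_le_pos; lra].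
      apply Rmult_le_compat_r; [apply Rmult_le_pos|]; lra. }
    assert (0 <= 2 * CH Om * Om ^ 2 * Fm ^ 2) by (apply Rmult_le_pos; [apply Rmult_le_pos; [apply Rmult_le_pos; lra|apply pow2_ge_0]|apply pow2_ge_0]).
    replace ((2 * PI * (INR (S p) * Cw Om) ^ 2 + 2 * CH Om * Om ^ 2) * Fm ^ 2)
      with (2 * (PI * (INR (S p) * (Cw Om * Fm)) ^ 2) + 2 * CH Om * Om ^ 2 * Fm ^ 2) by ring.
    assert (0 <= PI * (INR M * (Cw Om * Fm)) ^ 2) by (apply Rmult_le_pos; [lra|apply pow2_ge_0]).
    nra.
  - replace M with (S p + (M - S p))%nat by lia.
    rewrite (NC_ext x _ (fun t => Cplus (Hw p lam alpha f 1 (S p) t) (Hw p lam alpha f (p + 2) (M - S p) t))).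
    2: { intros t. unfold Hw. rewrite cs_split. f_equal. apply cs_ext. intros. f_equal. lia. }
    eapply Rle_trans. apply NC_plus; try lra; apply CC_Hw.
    pose proof (col_low p Om lam alpha f Fm x HH Hx).
    pose proof (col_high p Om lam alpha f Fm x (p + 2) (M - S p) HH Hx ltac:(lia)).
    pose proof (Hs (p + 2)%nat (M - S p)%nat ltac:(lia)).
    assert (CH Om * Fm ^ 2 * rs (fun j => xi p lam alpha (p + 2 + j) ^ 2) (M - S p) <= CH Om * Fm ^ 2 * Om ^ 2).
    { apply Rmult_le_compat_l; auto. apply Rmult_le_pos; auto; apply pow2_ge_0. }
    replace ((2 * PI * (INR (S p) * Cw Om) ^ 2 + 2 * CH Om * Om ^ 2) * Fm ^ 2)
      with (2 * (PI * (INR (S p) * (Cw Om * Fm)) ^ 2) + 2 * (CH Om * Fm ^ 2 * Om ^ 2)) by ring.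
    unfold Hw in *. lra.
Qed.

Lemma window_bound p Om lam alpha f Fm x i n M1 L : Hyp p Om lam alpha f Fm -> 0 <= x <= PI -> (p + 2 <= M1)%nat ->
  Cmod (cs (fun j => QTterm p lam alpha x f (S n) i (M1 + j)) L) ^ 2
   <= CRow p Om * (CH Om * Fm ^ 2 * rs (fun j => xi p lam alpha (M1 + j) ^ 2) L).
Proof.
  intros HH Hx HM. pose proof HH as [HO [HF [Hf [Hxi Hs]]]].
  eapply Rle_trans. 2: eapply Rle_trans.
  2: apply (rows_all p Om lam alpha f Fm x i (Hw p lam alpha f M1 L) (S n)); auto; apply CC_Hw.
  - rewrite rs_S. rewrite sum_QT.
    assert (0 <= rs (fun n0 => Cmod (RI x (fun t => Cmult (ccf (rhoi p lam (S n0) i) t) (Hw p lam alpha f M1 L t))) ^ 2) n)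
      by (apply rs_ge0; intros; apply pow2_ge_0).
    lra.
  - apply Rmult_le_compat_l. apply CRow_pos; lra. apply col_high; auto.
Qed.


Lemma rs_sum_n (X : nat -> R) m : rs X (S m) = sum_n X m.
Proof.
  induction m. simpl. rewrite sum_O. ring.
  rewrite sum_Sn, <- IHm. simpl. reflexivity.
Qed.

Lemma cs_sum_n (a : nat -> C) m : cs a (S m) = @sum_n C_AbelianMonoid a m.
Proof.
  induction m. simpl. rewrite sum_O. apply injective_projections; simpl; ring.
  rewrite sum_Sn, <- IHm. reflexivity.
Qed.

Lemma ball_R (l y eps : R) : ball l eps y -> Rabs (y - l) < eps.
Proof. intros H. unfold ball in H; simpl in H. unfold AbsRing_ball, abs, minus, plus, opp in H; simpl in H. exact H. Qed.

Lemma tail_small (X : nat -> R) l : is_series X l -> forall eps, 0 < eps ->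
  exists N0, forall n L, (N0 <= n)%nat -> Rabs (rs (fun j => X (n + j)%nat) L) < eps.
Proof.
  intros HX eps He.
  destruct (proj1 (filterlim_locally (sum_n X) l) HX (mkposreal (eps / 2) ltac:(lra))) as [N HN].
  exists (S N). intros n L Hn.
  assert (E : rs (fun j => X (n + j)%nat) L = rs X (n + L) - rs X n) by (rewrite rs_split; ring).
  rewrite E. destruct n as [|n']; [lia|].
  replace (S n' + L)%nat with (S (n' + L)) by lia.
  rewrite !rs_sum_n.
  pose proof (ball_R _ _ _ (HN (n' + L)%nat ltac:(lia))). pose proof (ball_R _ _ _ (HN n' ltac:(lia))).
  simpl in *. unfold Rabs in *. repeat destruct Rcase_abs; lra.
Qed.

Lemma norm_m_prop f : in_m f -> 0 <= norm_m f /\ forall k i, (1 <= k)%nat -> Cmod (f k i) <= norm_m f.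
Proof.
  intros [M HM]. unfold norm_m.
  set (E := fun r => exists n i, (1 <= n)%nat /\ r = Cmod (f n i)).
  destruct (Lub_Rbar_correct E) as [Hub Hlub].
  assert (Hle : Rbar_le (Lub_Rbar E) M).
  { apply Hlub. intros r [n [i [Hn ->]]]. simpl. apply HM; auto. }
  assert (Hge : forall n i, (1 <= n)%nat -> Rbar_le (Cmod (f n i)) (Lub_Rbar E)).
  { intros n i Hn. apply Hub. exists n, i; auto. }
  specialize (Hge 1%nat false (le_n 1)).
  destruct (Lub_Rbar E) as [r| |]; simpl in *; try contradiction.
  split. pose proof (Cmod_ge_0 (f 1%nat false)). lra.
  intros k i Hk. assert (Rbar_le (Cmod (f k i)) (Finite r)) by (apply Hub; exists k, i; auto). simpl in H. auto.
Qed.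

Lemma ex_series_zero_tail (D : nat -> R) n0 : (forall k, (n0 <= k)%nat -> D k = 0) -> ex_series D.
Proof.
  intros H. apply (ex_series_incr_n D n0). exists 0.
  unfold is_series. change (is_lim_seq (sum_n (fun k => D (n0 + k)%nat)) (Finite 0)).
  apply (is_lim_seq_ext (fun _ => 0)). 2: apply is_lim_seq_const.
  intros m. induction m. rewrite sum_O. rewrite H; auto; lia.
  rewrite sum_Sn, <- IHm. rewrite H by lia. unfold plus; simpl. ring.
Qed.

Lemma sq_tri (a b c : R) : 0 <= a -> 0 <= b -> 0 <= c -> a <= b + c -> a ^ 2 <= 2 * b ^ 2 + 2 * c ^ 2.
Proof. intros. pose proof (pow2_ge_0 (b - c)). assert (a ^ 2 <= (b + c) ^ 2) by (apply pow_incr; lra). nra. Qed.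

Lemma Cmod_tri3 a b c : Cmod (Cminus a c) <= Cmod (Cminus a b) + Cmod (Cminus b c).
Proof. replace (Cminus a c) with (Cplus (Cminus a b) (Cminus b c)) by field. apply Cmod_triangle. Qed.

Lemma xi_series p lam alpha : in_Sp p lam alpha -> ex_series (fun n => xi p lam alpha (S n) ^ 2).
Proof.
  intros [HA HB].
  set (A := fun n => Cmod (Cminus (rho lam (S n)) (RtoC (INR (S n) - INR p - 1))) ^ 2).
  set (B := fun n => Cmod (Cminus (alpha (S n)) (RtoC (2 / PI))) ^ 2).
  set (D := fun n => Cmod (Cminus (RtoC (INR (S n) - INR p - 1)) (rho_t p (S n))) ^ 2).
  set (E := fun n => Cmod (Cminus (RtoC (2 / PI)) (alpha_t p (S n))) ^ 2).
  assert (HD : ex_series D).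
  { apply (ex_series_zero_tail D p). intros k Hk. unfold D.
    destruct (Nat.eq_dec k p).
    - subst. rewrite rho_t_low by lia. replace (INR (S p) - INR p - 1) with 0 by (rewrite S_INR; ring).
      replace (Cminus (RtoC 0) (RtoC 0)) with (RtoC 0) by field. rewrite Cmod_0. ring.
    - rewrite rho_t_high by lia. unfold mk. replace (Cminus (RtoC (INR (S k) - INR p - 1)) (RtoC (INR (S k) - INR p - 1))) with (RtoC 0) by field.
      rewrite Cmod_0. ring. }
  assert (HE : ex_series E).
  { apply (ex_series_zero_tail E (S p)). intros k Hk. unfold E.
    rewrite alpha_t_high by lia. replace (Cminus (RtoC (2 / PI)) (RtoC (2 / PI))) with (RtoC 0) by field.
    rewrite Cmod_0. ring. }
  apply (ex_series_le (K:=R_AbsRing) (V:=R_CompleteNormedModule) _ (fun n => scal 4 (plus (plus (plus (A n) (D n)) (B n)) (E n)))).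
  2: { apply (ex_series_scal_l (K:=R_AbsRing) (V:=R_NormedModule)). apply (ex_series_plus (K:=R_AbsRing) (V:=R_NormedModule)); [apply (ex_series_plus (K:=R_AbsRing) (V:=R_NormedModule)); [apply (ex_series_plus (K:=R_AbsRing) (V:=R_NormedModule))|]|]; auto. }
  intros n. unfold scal, plus; simpl. unfold mult; simpl. unfold norm; simpl. unfold abs; simpl.
  rewrite Rabs_right by (apply Rle_ge, pow2_ge_0).
  unfold xi.
  set (a := Cmod (Cminus (rho lam (S n)) (rho_t p (S n)))).
  set (b := Cmod (Cminus (alpha (S n)) (alpha_t p (S n)))).
  assert (Ha : a ^ 2 <= 2 * A n + 2 * D n).
  { unfold A, D, a. apply sq_tri; [apply Cmod_ge_0|apply Cmod_ge_0|apply Cmod_ge_0|apply Cmod_tri3]. }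
  assert (Hb : b ^ 2 <= 2 * B n + 2 * E n).
  { unfold B, E, b. apply sq_tri; [apply Cmod_ge_0|apply Cmod_ge_0|apply Cmod_ge_0|apply Cmod_tri3]. }
  assert (0 <= a) by apply Cmod_ge_0. assert (0 <= b) by apply Cmod_ge_0.
  pose proof (pow2_ge_0 (a - b)).
  nra.
Qed.

Lemma partial_le_Series (X : nat -> R) m : ex_series X -> (forall k, 0 <= X k) -> sum_n X m <= Series X.
Proof.
  intros HX Hp.
  assert (H := is_lim_seq_le_loc (fun _ => sum_n X m) (sum_n X) (sum_n X m) (Series X)).
  simpl in H. apply H.
  - exists m. intros n Hn. replace n with (m + (n - m))%nat by lia.
    rewrite <- !rs_sum_n. replace (S (m + (n - m))) with (S m + (n - m))%nat by lia.
    rewrite rs_split. assert (0 <= rs (fun k => X (S m + k)%nat) (n - m)) by (apply rs_ge0; auto). lra.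
  - apply is_lim_seq_const.
  - apply (Series_correct X HX).
Qed.

Lemma Hyp_of p Om lam alpha f : 0 < Om -> in_B p Om lam alpha -> in_m f -> Hyp p Om lam alpha f (norm_m f).
Proof.
  intros HO [HS Hsq] Hm. destruct (norm_m_prop f Hm) as [HF Hf].
  set (X := fun n => xi p lam alpha (S n) ^ 2).
  assert (HX : ex_series X) by (apply xi_series; auto).
  assert (HX0 : forall k, 0 <= X k) by (intros; apply pow2_ge_0).
  assert (HSer0 : 0 <= Series X).
  { eapply Rle_trans. 2: apply (partial_le_Series X 0 HX HX0). rewrite sum_O. auto. }
  assert (HSer : Series X <= Om ^ 2).
  { rewrite <- (sqrt_sqrt (Series X)) by auto. replace (sqrt (Series X) * sqrt (Series X)) with (sqrt (Series X) ^ 2) by ring.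
    apply pow_incr. split; auto. apply sqrt_pos. }
  assert (Hs : forall M1 L, (1 <= M1)%nat -> rs (fun j => xi p lam alpha (M1 + j) ^ 2) L <= Om ^ 2).
  { intros M1 L HM.
    apply Rle_trans with (rs X (S (M1 - 1 + L))).
    - rewrite (rs_ext _ (fun j => X (M1 - 1 + j)%nat)).
      2: { intros. unfold X. f_equal. f_equal. lia. }
      replace (S (M1 - 1 + L)) with ((M1 - 1) + S L)%nat by lia. rewrite rs_split. simpl.
      assert (0 <= rs X (M1 - 1)) by (apply rs_ge0; auto).
      assert (0 <= X (M1 - 1 + L)%nat) by auto. lra.
    - rewrite rs_sum_n. eapply Rle_trans. apply partial_le_Series; auto. auto. }
  split; [|split; [|split; [|split]]]; auto.
  intros k Hk. pose proof (Hs k 1%nat Hk). simpl in H. rewrite Nat.add_0_r in H.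
  pose proof (xi_ge0 p lam alpha k).
  destruct (Rle_dec (xi p lam alpha k) Om); auto.
  set (X0 := xi p lam alpha k) in *.
  assert (0 < (X0 - Om) * (X0 + Om)) by (apply Rmult_lt_0_compat; lra).
  assert (X0 ^ 2 - Om ^ 2 = (X0 - Om) * (X0 + Om)) by ring.
  lra.
Qed.


Lemma sum_n_m_cs (a : nat -> C) m1 m2 : (m1 <= m2)%nat ->
  @sum_n_m C_AbelianMonoid a m1 m2 = cs (fun j => a (m1 + j)%nat) (S (m2 - m1)).
Proof.
  intros H. destruct m1 as [|m'].
  - change (@sum_n_m C_AbelianMonoid a 0 m2) with (@sum_n C_AbelianMonoid a m2). rewrite <- cs_sum_n.
    rewrite Nat.sub_0_r. apply cs_ext. intros; reflexivity.
  - rewrite (sum_n_m_sum_n (G:=C_AbelianGroup)) by lia. rewrite <- !cs_sum_n.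
    replace (S m2) with (S m' + S (m2 - S m'))%nat by lia. rewrite cs_split.
    unfold minus, plus, opp; simpl. apply injective_projections; simpl; ring.
Qed.

Lemma row_ex_series p Om lam alpha f Fm x i n :
  Hyp p Om lam alpha f Fm -> 0 <= x <= PI -> ex_series (fun k => xi p lam alpha k ^ 2) ->
  @ex_series C_AbsRing C_NormedModule (fun k => QTterm p lam alpha x f (S n) i (S k)).
Proof.
  intros HH Hx HY. pose proof HH as [HO [HF [Hf [Hxi Hs]]]].
  destruct HY as [l HY].
  apply (ex_series_Cauchy (V:=C_CompleteNormedModule)). intros eps.
  set (Cc := CRow p Om * (CH Om * Fm ^ 2)).
  assert (HCc : 0 <= Cc).
  { unfold Cc. apply Rmult_le_pos. apply CRow_pos; lra. apply Rmult_le_pos. apply CH_pos. apply pow2_ge_0. }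
  assert (He : 0 < eps) by apply cond_pos.
  set (e2 := eps ^ 2 / (Cc + 1)).
  assert (He2 : 0 < e2) by (unfold e2; apply Rdiv_lt_0_compat; [apply pow_lt; lra|lra]).
  destruct (tail_small _ l HY e2 He2) as [N0 HN0].
  exists (Nat.max N0 (S p)). intros m1 m2 Hm1 Hm2.
  destruct (le_lt_dec m1 m2) as [Hle|Hlt].
  - rewrite sum_n_m_cs by auto.
    set (L := S (m2 - m1)).
    change (Cmod (cs (fun j => QTterm p lam alpha x f (S n) i (S (m1 + j))) L) < eps).
    rewrite (cs_ext _ (fun j => QTterm p lam alpha x f (S n) i (S m1 + j)%nat)) by (intros; reflexivity).
    pose proof (window_bound p Om lam alpha f Fm x i n (S m1) L HH Hx ltac:(lia)).
    pose proof (HN0 (S m1) L ltac:(lia)).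
    set (r := rs (fun j => xi p lam alpha (S m1 + j) ^ 2) L) in *.
    assert (Hr0 : 0 <= r) by (apply rs_ge0; intros; apply pow2_ge_0).
    rewrite Rabs_right in H0 by lra.
    assert (Cmod (cs (fun j => QTterm p lam alpha x f (S n) i (S m1 + j)) L) ^ 2 < eps ^ 2).
    { eapply Rle_lt_trans. apply H. fold Cc.
      replace (CRow p Om * (CH Om * Fm ^ 2 * r)) with (Cc * r) by (unfold Cc; ring).
      apply Rle_lt_trans with (Cc * e2). apply Rmult_le_compat_l; lra.
      replace (eps ^ 2) with ((Cc + 1) * e2) by (unfold e2; field; lra).
      nra. }
    pose proof (Cmod_ge_0 (cs (fun j => QTterm p lam alpha x f (S n) i (S m1 + j)) L)).
    destruct (Rlt_le_dec (Cmod (cs (fun j => QTterm p lam alpha x f (S n) i (S m1 + j)) L)) eps); auto.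
    assert (eps ^ 2 <= Cmod (cs (fun j => QTterm p lam alpha x f (S n) i (S m1 + j)) L) ^ 2) by (apply pow_incr; lra).
    lra.
  - rewrite sum_n_m_zero by auto. rewrite norm_zero. auto.
Qed.


Lemma lim_rs (v : nat -> nat -> R) (w : nat -> R) N :
  (forall n, is_lim_seq (fun M => v n M) (w n)) -> is_lim_seq (fun M => rs (fun n => v n M) N) (rs w N).
Proof.
  intros H. induction N; simpl. apply is_lim_seq_const.
  apply (is_lim_seq_plus' _ _ _ _ IHN (H N)).
Qed.

Lemma lim_cmod2 (a : nat -> C) l : @is_series C_AbsRing C_NormedModule a l ->
  is_lim_seq (fun M => Cmod (@sum_n C_AbelianMonoid a M) ^ 2) (Cmod l ^ 2).
Proof.
  intros H.
  assert (H1 : is_lim_seq (fun M => Cmod (@sum_n C_AbelianMonoid a M)) (Cmod l)).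
  { unfold is_lim_seq. change (filterlim (fun M => Cmod (sum_n a M)) eventually (locally (Cmod l))).
    apply (filterlim_comp _ _ _ (sum_n a) Cmod eventually (locally l) (locally (Cmod l)) H).
    apply (filterlim_norm (K:=C_AbsRing) (V:=C_NormedModule) l). }
  apply (is_lim_seq_ext (fun M => Cmod (sum_n a M) * Cmod (sum_n a M))). intros; ring.
  replace (Cmod l ^ 2) with (Cmod l * Cmod l) by ring.
  apply is_lim_seq_mult'; auto.
Qed.

Theorem lemma3p3 (p : nat) (Om : R) (HOm : 0 < Om) :
  exists K : R,
    forall (lam alpha : nat -> C),
      in_B p Om lam alpha ->
      forall x : R, 0 <= x <= PI ->
      forall f : nat -> bool -> C, in_m f ->
        exists g : nat -> bool -> C,
          (forall n i, (1 <= n)%nat ->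
             is_series (fun k => QTterm p lam alpha x f n i (S k)) (g n i)) /\
          in_l2 g /\
          norm_l2 g <= K * norm_m f.
Proof.
  exists (sqrt (2 * Kb p Om)).
  intros lam alpha HB x Hx f Hm.
  set (Fm := norm_m f).
  assert (HH : Hyp p Om lam alpha f Fm) by (apply Hyp_of; auto).
  pose proof HH as [HO [HF [Hf [Hxi Hs]]]].
  assert (HY : ex_series (fun k => xi p lam alpha k ^ 2)).
  { apply (proj2 (ex_series_incr_1 (fun k => xi p lam alpha k ^ 2))). apply xi_series. apply HB. }
  set (g := fun n i => epsilon (inhabits (RtoC 0)) (fun l => @is_series C_AbsRing C_NormedModule (fun k => QTterm p lam alpha x f n i (S k)) l)).
  assert (Hg : forall n i, (1 <= n)%nat -> @is_series C_AbsRing C_NormedModule (fun k => QTterm p lam alpha x f n i (S k)) (g n i)).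
  { intros n i Hn. destruct n as [|n]; [lia|]. unfold g. apply epsilon_spec.
    apply (row_ex_series p Om lam alpha f Fm x i n HH Hx HY). }
  exists g. split; [exact Hg|].
  assert (HKb : 0 <= Kb p Om).
  { unfold Kb. apply Rmult_le_pos. apply CRow_pos; lra.
    pose proof PI_RGT_0. pose proof (CH_pos Om).
    assert (0 <= 2 * PI * (INR (S p) * Cw Om) ^ 2) by (apply Rmult_le_pos; [lra|apply pow2_ge_0]).
    assert (0 <= 2 * CH Om * Om ^ 2) by (apply Rmult_le_pos; [lra|apply pow2_ge_0]). lra. }
  assert (Hrow : forall i N, rs (fun n => Cmod (g (S n) i) ^ 2) N <= Kb p Om * Fm ^ 2).
  { intros i N.
    assert (Hl := lim_rs (fun n M => Cmod (@sum_n C_AbelianMonoid (fun k => QTterm p lam alpha x f (S n) i (S k)) M) ^ 2)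
                         (fun n => Cmod (g (S n) i) ^ 2) N).
    specialize (Hl (fun n => lim_cmod2 _ _ (Hg (S n) i ltac:(lia)))).
    assert (Hu : forall M, rs (fun n => Cmod (@sum_n C_AbelianMonoid (fun k => QTterm p lam alpha x f (S n) i (S k)) M) ^ 2) N <= Kb p Om * Fm ^ 2).
    2: { pose proof (is_lim_seq_le _ _ _ _ Hu Hl (is_lim_seq_const (Kb p Om * Fm ^ 2))) as Hle. simpl in Hle. exact Hle. }
    intros M. rewrite (rs_ext _ (fun n => Cmod (cs (fun j => QTterm p lam alpha x f (S n) i (1 + j)) (S M)) ^ 2)).
    apply (partial_bound p Om lam alpha f Fm x i (S M) N HH Hx).
    intros n _. rewrite <- cs_sum_n. reflexivity. }
  set (Z := fun n => Cmod (g (S n) false) ^ 2 + Cmod (g (S n) true) ^ 2).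
  assert (HZ0 : forall n, 0 <= Z n) by (intros; unfold Z; pose proof (pow2_ge_0 (Cmod (g (S n) false))); pose proof (pow2_ge_0 (Cmod (g (S n) true))); lra).
  assert (HZb : forall N, sum_n Z N <= 2 * Kb p Om * Fm ^ 2).
  { intros N. rewrite <- rs_sum_n. unfold Z. rewrite rs_plus.
    pose proof (Hrow false (S N)). pose proof (Hrow true (S N)). lra. }
  assert (HZe : ex_finite_lim_seq (sum_n Z)).
  { apply (ex_finite_lim_seq_incr _ (2 * Kb p Om * Fm ^ 2)); auto.
    intros n. rewrite sum_Sn. unfold plus; simpl. pose proof (HZ0 (S n)). lra. }
  destruct HZe as [lz Hlz].
  assert (HZs : is_series Z lz) by exact Hlz.
  split. exists lz. exact HZs.
  unfold norm_l2. fold Z. rewrite (is_series_unique Z lz HZs).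
  assert (Hlz2 : lz <= 2 * Kb p Om * Fm ^ 2).
  { assert (Hle := is_lim_seq_le (sum_n Z) (fun _ => 2 * Kb p Om * Fm ^ 2) lz (2 * Kb p Om * Fm ^ 2)).
    simpl in Hle. apply Hle; auto. apply is_lim_seq_const. }
  eapply Rle_trans. apply sqrt_le_1_alt. apply Hlz2.
  rewrite sqrt_mult_alt. rewrite sqrt_pow2 by auto. fold Fm. lra.
  apply Rmult_le_pos; lra.
Qed.
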